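(* The theory $T_0^+$ has a complete model completion $T^\ast$; $T^\ast$ admits elimination of quantifiers and is $\aleph_0$-categorical, and in $T^\ast$ the definable closure and the algebraic closure coincide.
   Context: The language consists of unary predicates $Q_0,Q_1,Q_2$ and function symbols $F_0$ (one-place), $F_1$ (two-place), $F_2,F_3$ (one-place). $T_0^+$ is the theory saying: $Q_0,Q_1,Q_2$ partition the universe; $F_0$ is a (total) function from $Q_1$ to $Q_0$; $F_1$ is a (total) function from $Q_2\times Q_0$ to $Q_1$; $F_2$ is a (total) function from $Q_0$ to $Q_2$; $F_3$ is a (total) function from $Q_2$ to $Q_0$; $F_0(F_1(z,x))=x$ for all $z\in Q_2$, $x\in Q_0$; and $F_3(F_2(x))=x$ for all $x\in Q_0$. The definable closure $\mathrm{dcl}(A)$ is the set of elements $b$ such that $\mathrm{tp}(b,A)$ is realized only by $b$; the algebraic closure $\mathrm{acl}(A)$ is the set of $b$ such that $\mathrm{tp}(b,A)$ has finitely many realizations (in a monster model). *)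

(* Defs.v *)
(* Many-sorted first-order logic for the language of T_0^+.
   The partition Q0,Q1,Q2 is rendered by three sorts. *)
From Stdlib Require Import List Bool Arith.

Set Implicit Arguments.

Inductive sort : Type := S0 | S1 | S2.

Definition sort_eq_dec (s t : sort) : {s = t} + {s <> t}.
Proof. decide equality. Defined.

Definition sort_eqb (s t : sort) : bool :=
  if sort_eq_dec s t then true else false.

Inductive term : sort -> Type :=
| tvar : forall s : sort, nat -> term s
| tF0 : term S1 -> term S0
| tF1 : term S2 -> term S0 -> term S1
| tF2 : term S0 -> term S2
| tF3 : term S2 -> term S0.

Inductive form : Type :=
| fEq : forall s : sort, term s -> term s -> form
| fFalse : form
| fNot : form -> form
| fAnd : form -> form -> form
| fOr : form -> form -> form
| fImp : form -> form -> form
| fEx : sort -> nat -> form -> form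
| fAll : sort -> nat -> form -> form.

Arguments tvar : clear implicits.
Arguments fEq {s} _ _.

Fixpoint tfree (s : sort) (n : nat) (s' : sort) (t : term s') : bool :=
  match t with
  | tvar s'' m => sort_eqb s s'' && Nat.eqb n m
  | tF0 t1 => tfree s n t1
  | tF1 t1 t2 => tfree s n t1 || tfree s n t2
  | tF2 t1 => tfree s n t1
  | tF3 t1 => tfree s n t1
  end.

Fixpoint ffree (s : sort) (n : nat) (phi : form) : bool :=
  match phi with
  | @fEq _ t1 t2 => tfree s n t1 || tfree s n t2
  | fFalse => false
  | fNot p => ffree s n p
  | fAnd p q | fOr p q | fImp p q => ffree s n p || ffree s n q
  | fEx s' m p | fAll s' m p =>
      negb (sort_eqb s s' && Nat.eqb n m) && ffree s n p
  end.

Definition sentence (phi : form) : Prop := forall s n, ffree s n phi = false.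

Fixpoint qfree (phi : form) : bool :=
  match phi with
  | @fEq _ _ _ | fFalse => true
  | fNot p => qfree p
  | fAnd p q | fOr p q | fImp p q => qfree p && qfree q
  | fEx _ _ _ | fAll _ _ _ => false
  end.

Definition theory := form -> Prop.

(* many-sorted structures; each sort is nonempty (standard convention) *)
Record structure : Type := {
  car : sort -> Type;
  inh : forall s, car s;
  fn0 : car S1 -> car S0;
  fn1 : car S2 -> car S0 -> car S1;
  fn2 : car S0 -> car S2;
  fn3 : car S2 -> car S0 }.

Definition valuation (M : structure) := forall s : sort, nat -> car M s.

Definition upd (M : structure) (v : valuation M) (s : sort) (n : nat)
  (a : car M s) : valuation M :=
  fun s' m =>
    match sort_eq_dec s s' with
    | left e => if Nat.eqb m n then eq_rect s (car M) a s' e else v s' m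
    | right _ => v s' m
    end.

Fixpoint teval (M : structure) (v : valuation M) (s : sort) (t : term s)
  : car M s :=
  match t in term s0 return car M s0 with
  | tvar s' m => v s' m
  | tF0 t1 => fn0 M (teval v t1)
  | tF1 t1 t2 => fn1 M (teval v t1) (teval v t2)
  | tF2 t1 => fn2 M (teval v t1)
  | tF3 t1 => fn3 M (teval v t1)
  end.

Fixpoint sat (M : structure) (v : valuation M) (phi : form) : Prop :=
  match phi with
  | @fEq _ t1 t2 => teval v t1 = teval v t2
  | fFalse => False
  | fNot p => ~ sat v p
  | fAnd p q => sat v p /\ sat v q
  | fOr p q => sat v p \/ sat v q
  | fImp p q => sat v p -> sat v q
  | fEx s n p => exists a : car M s, sat (upd v s n a) p
  | fAll s n p => forall a : car M s, sat (upd v s n a) p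
  end.

Definition is_model (T : theory) (M : structure) : Prop :=
  forall phi, T phi -> forall v : valuation M, sat v phi.

Definition ax_F0F1 : form :=
  fAll S2 0 (fAll S0 0
    (fEq (tF0 (tF1 (tvar S2 0) (tvar S0 0))) (tvar S0 0))).

Definition ax_F3F2 : form :=
  fAll S0 0 (fEq (tF3 (tF2 (tvar S0 0))) (tvar S0 0)).

Definition T0plus : theory := fun phi => phi = ax_F0F1 \/ phi = ax_F3F2.

Record embedding (M N : structure) : Type := {
  emap : forall s, car M s -> car N s;
  emap_inj : forall s (a b : car M s), emap s a = emap s b -> a = b;
  emap_F0 : forall a, emap S0 (fn0 M a) = fn0 N (emap S1 a);
  emap_F1 : forall a b, emap S1 (fn1 M a b) = fn1 N (emap S2 a) (emap S0 b);
  emap_F2 : forall a, emap S2 (fn2 M a) = fn2 N (emap S0 a);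
  emap_F3 : forall a, emap S0 (fn3 M a) = fn3 N (emap S2 a) }.

Definition vmap (M N : structure) (f : embedding M N) (v : valuation M)
  : valuation N := fun s m => emap f s (v s m).

Definition elementary (M N : structure) (f : embedding M N) : Prop :=
  forall (phi : form) (v : valuation M), sat v phi <-> sat (vmap f v) phi.

Definition isomorphism (M N : structure) (f : embedding M N) : Prop :=
  forall s (b : car N s), exists a, emap f s a = b.

Definition model_complete (T : theory) : Prop :=
  forall M N (f : embedding M N), is_model T M -> is_model T N -> elementary f.

(* T* is a model completion of T (Chang-Keisler): T* |- T, every model of T
   embeds in a model of T*, T* is model complete, and for every model A of T
   the theory T* u Diag(A) is complete, i.e. any two models of T* into which A
   embeds satisfy the same L(A)-sentences. *)
Definition model_completion (T Tstar : theory) : Prop :=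
  (forall M, is_model Tstar M -> is_model T M) /\
  (forall A, is_model T A -> exists M, is_model Tstar M /\ inhabited (embedding A M)) /\
  model_complete Tstar /\
  (forall A M N (f : embedding A M) (g : embedding A N),
      is_model T A -> is_model Tstar M -> is_model Tstar N ->
      forall (phi : form) (v : valuation A),
        sat (vmap f v) phi <-> sat (vmap g v) phi).

Definition complete (T : theory) : Prop :=
  (exists M, is_model T M) /\
  (forall M N, is_model T M -> is_model T N ->
     forall phi, sentence phi ->
       forall (vM : valuation M) (vN : valuation N), sat vM phi <-> sat vN phi).

Definition quantifier_elimination (T : theory) : Prop :=
  forall phi : form, exists psi : form,
    qfree psi = true /\
    (forall s n, ffree s n psi = true -> ffree s n phi = true) /\
    (forall M, is_model T M -> forall v : valuation M, sat v phi <-> sat v psi).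

Definition universe (M : structure) := { s : sort & car M s }.

Definition countably_infinite (X : Type) : Prop :=
  exists (f : nat -> X) (g : X -> nat),
    (forall n, g (f n) = n) /\ (forall x, f (g x) = x).

Definition aleph0_categorical (T : theory) : Prop :=
  (exists M, is_model T M /\ countably_infinite (universe M)) /\
  (forall M N, is_model T M -> is_model T N ->
     countably_infinite (universe M) -> countably_infinite (universe N) ->
     exists f : embedding M N, isomorphism f).

(* A parameter set A in M is given sortwise by A s : car M s -> Prop.
   phi with distinguished variable (s0,n) and parameters v from A. *)
Definition params_in (M : structure) (A : forall s, car M s -> Prop)
  (phi : form) (s0 : sort) (n : nat) (v : valuation M) : Prop :=
  forall s m, ffree s m phi = true -> ~ (s = s0 /\ m = n) -> A s (v s m).

Definition in_dcl (M : structure) (A : forall s, car M s -> Prop)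
  (s0 : sort) (b : car M s0) : Prop :=
  exists (phi : form) (n : nat) (v : valuation M),
    params_in A phi s0 n v /\
    sat (upd v s0 n b) phi /\
    (forall c : car M s0, sat (upd v s0 n c) phi -> c = b).

Definition in_acl (M : structure) (A : forall s, car M s -> Prop)
  (s0 : sort) (b : car M s0) : Prop :=
  exists (phi : form) (n : nat) (v : valuation M),
    params_in A phi s0 n v /\
    sat (upd v s0 n b) phi /\
    (exists l : list (car M s0),
       forall c : car M s0, sat (upd v s0 n c) phi -> In c l).

Definition dcl_eq_acl (T : theory) : Prop :=
  forall M, is_model T M ->
    forall (A : forall s, car M s -> Prop) (s0 : sort) (b : car M s0),
      @in_acl M A s0 b <-> @in_dcl M A s0 b.

(* Main.v *)
Require Import Defs.
From Stdlib Require Import List Bool Arith Lia Classical ClassicalEpsilon FunctionalExtensionality Eqdep_dec Cantor.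
Import ListNotations.
Set Implicit Arguments.

Lemma sort_eq_refl s : sort_eq_dec s s = left eq_refl.
Proof. destruct (sort_eq_dec s s) as [e|n]; [f_equal; apply UIP_dec, sort_eq_dec | now elim n]. Qed.

Lemma sort_eqb_true s t : sort_eqb s t = true <-> s = t.
Proof. unfold sort_eqb; destruct (sort_eq_dec s t); split; congruence. Qed.

Lemma sort_eqb_refl s : sort_eqb s s = true.
Proof. apply sort_eqb_true; auto. Qed.

Lemma upd_same M (v : valuation M) s n a : upd v s n a s n = a.
Proof. unfold upd. rewrite sort_eq_refl, Nat.eqb_refl. reflexivity. Qed.

Lemma upd_other M (v : valuation M) s n a s' m : (s',m) <> (s,n) -> upd v s n a s' m = v s' m.
Proof.
  intro H. unfold upd. destruct (sort_eq_dec s s') as [e|e]; auto.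
  subst. destruct (Nat.eqb_spec m n); auto. subst; congruence.
Qed.

Lemma upd_eta M (v : valuation M) s n : upd v s n (v s n) = v.
Proof.
  apply functional_extensionality_dep; intro s'; apply functional_extensionality; intro m.
  destruct (sort_eq_dec s s') as [e|e]; [subst s'; destruct (Nat.eq_dec m n); [subst; apply upd_same|]|];
  rewrite upd_other; auto; congruence.
Qed.

Lemma tfree_var s n s' m : tfree s n (tvar s' m) = true <-> s = s' /\ n = m.
Proof. simpl. rewrite andb_true_iff, sort_eqb_true, Nat.eqb_eq. tauto. Qed.

Lemma teval_ext M (v v' : valuation M) s (t : term s) :
  (forall s' m, tfree s' m t = true -> v s' m = v' s' m) -> teval v t = teval v' t.
Proof.
  induction t; simpl; intro H; try (f_equal; apply IHt; intros; apply H; auto; fail).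
  - apply H. apply tfree_var; auto.
  - f_equal; [apply IHt1|apply IHt2]; intros; apply H; rewrite H0; auto using orb_true_r.
Qed.

Lemma qfree_ext M (v v' : valuation M) phi : qfree phi = true ->
  (forall s m, ffree s m phi = true -> v s m = v' s m) -> (sat v phi <-> sat v' phi).
Proof.
  induction phi; simpl; intros Hq H; try discriminate.
  - rewrite (teval_ext v v' t), (teval_ext v v' t0); [tauto| |];
      intros; apply H; rewrite H0; auto using orb_true_r.
  - tauto.
  - rewrite IHphi; tauto.
  - apply andb_true_iff in Hq; destruct Hq.
    rewrite IHphi1, IHphi2; auto; [tauto| |]; intros; apply H; rewrite H2; auto using orb_true_r.
  - apply andb_true_iff in Hq; destruct Hq.
    rewrite IHphi1, IHphi2; auto; [tauto| |]; intros; apply H; rewrite H2; auto using orb_true_r.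
  - apply andb_true_iff in Hq; destruct Hq.
    rewrite IHphi1, IHphi2; auto; [tauto| |]; intros; apply H; rewrite H2; auto using orb_true_r.
Qed.

Definition T0 (M : structure) : Prop :=
  (forall z x, fn0 M (fn1 M z x) = x) /\ (forall x, fn3 M (fn2 M x) = x).

Lemma T0_model M : is_model T0plus M <-> T0 M.
Proof.
  split.
  - intro H. split.
    + intros z x. pose proof (H ax_F0F1 (or_introl eq_refl) (fun s _ => inh M s)) as H1.
      simpl in H1. specialize (H1 z x). unfold upd in H1. simpl in H1. exact H1.
    + intros x. pose proof (H ax_F3F2 (or_intror eq_refl) (fun s _ => inh M s)) as H1.
      simpl in H1. specialize (H1 x). unfold upd in H1. simpl in H1. exact H1.
  - intros [H1 H2] phi [->| ->] v; simpl; intros; unfold upd; simpl; auto.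
Qed.

Definition tin (V : list (sort*nat)) s (t : term s) : Prop :=
  forall s' m, tfree s' m t = true -> In (s',m) V.

Lemma tin_var V s m : In (s,m) V -> tin V (tvar s m).
Proof. intros H s' m' Hf. apply tfree_var in Hf. destruct Hf; subst; auto. Qed.
Lemma tin_F0 V t : tin V t -> tin V (tF0 t).
Proof. intros H s m Hf; apply H; auto. Qed.
Lemma tin_F2 V t : tin V t -> tin V (tF2 t).
Proof. intros H s m Hf; apply H; auto. Qed.
Lemma tin_F3 V t : tin V t -> tin V (tF3 t).
Proof. intros H s m Hf; apply H; auto. Qed.
Lemma tin_F1 V t1 t2 : tin V t1 -> tin V t2 -> tin V (tF1 t1 t2).
Proof. intros H1 H2 s m Hf; simpl in Hf; apply orb_true_iff in Hf; destruct Hf; auto. Qed.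
Lemma tin_F0_inv V t : tin V (tF0 t) -> tin V t.
Proof. intros H s m Hf; apply H; auto. Qed.
Lemma tin_F2_inv V t : tin V (tF2 t) -> tin V t.
Proof. intros H s m Hf; apply H; auto. Qed.
Lemma tin_F3_inv V t : tin V (tF3 t) -> tin V t.
Proof. intros H s m Hf; apply H; auto. Qed.
Lemma tin_F1_inv V t1 t2 : tin V (tF1 t1 t2) -> tin V t1 /\ tin V t2.
Proof. intros H; split; intros s m Hf; apply H; simpl; rewrite Hf; auto using orb_true_r. Qed.
Lemma tin_mono V V' s (t : term s) : tin V t -> incl V V' -> tin V' t.
Proof. intros H Hi s' m Hf; auto. Qed.

Lemma term_has_var s (t : term s) : exists s' m, tfree s' m t = true.
Proof.
  induction t; simpl; eauto.
  - exists s, n. apply tfree_var; auto.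
  - destruct IHt1 as (s'&m&H). exists s', m. rewrite H; auto.
Qed.

Definition approx M N (v : valuation M) (w : valuation N) V : Prop :=
  forall s (t1 t2 : term s), tin V t1 -> tin V t2 ->
    (teval v t1 = teval v t2 <-> teval w t1 = teval w t2).

Lemma approx_sym M N (v : valuation M) (w : valuation N) V : approx v w V -> approx w v V.
Proof. intros H s t1 t2 H1 H2. rewrite (H s t1 t2 H1 H2). tauto. Qed.

Lemma approx_refl M (v : valuation M) V : approx v v V.
Proof. intros s t1 t2 _ _. tauto. Qed.

Lemma approx_mono M N (v : valuation M) (w : valuation N) V V' :
  approx v w V' -> incl V V' -> approx v w V.
Proof. intros H Hi s t1 t2 H1 H2. apply H; eapply tin_mono; eauto. Qed.

Lemma approx_ext M N (v v' : valuation M) (w w' : valuation N) V :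
  approx v w V -> (forall s m, In (s,m) V -> v s m = v' s m) ->
  (forall s m, In (s,m) V -> w s m = w' s m) -> approx v' w' V.
Proof.
  intros H Hv Hw s t1 t2 H1 H2.
  rewrite <- (teval_ext v v' t1), <- (teval_ext v v' t2), <- (teval_ext w w' t1), <- (teval_ext w w' t2);
  auto.
Qed.

Lemma approx_nil M N (v : valuation M) (w : valuation N) : approx v w [].
Proof. intros s t1 t2 H1 _. destruct (term_has_var t1) as (s'&m&H). apply H1 in H. destruct H. Qed.

Fixpoint tsubst s0 n0 (u : term s0) s (t : term s) : term s :=
  match t in term s1 return term s1 with
  | tvar s1 m => match sort_eq_dec s0 s1 with
                 | left e => if Nat.eqb m n0 then eq_rect s0 term u s1 e else tvar s1 m
                 | right _ => tvar s1 m end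
  | tF0 t1 => tF0 (@tsubst s0 n0 u _ t1)
  | tF1 t1 t2 => tF1 (@tsubst s0 n0 u _ t1) (@tsubst s0 n0 u _ t2)
  | tF2 t1 => tF2 (@tsubst s0 n0 u _ t1)
  | tF3 t1 => tF3 (@tsubst s0 n0 u _ t1)
  end.

Lemma tsubst_eval M (v : valuation M) s0 n0 (u : term s0) s (t : term s) :
  teval (upd v s0 n0 (teval v u)) t = teval v (@tsubst s0 n0 u s t).
Proof.
  induction t; simpl; try congruence.
  unfold upd. destruct (sort_eq_dec s0 s) as [e|e]; [subst|reflexivity].
  simpl. destruct (Nat.eqb n n0); reflexivity.
Qed.

Lemma tsubst_tin V s0 n0 (u : term s0) s (t : term s) :
  tin V u -> tin ((s0,n0)::V) t -> tin V (@tsubst s0 n0 u s t).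
Proof.
  intros Hu; induction t; simpl; intro Ht.
  - destruct (sort_eq_dec s0 s) as [e|e].
    + subst. simpl. destruct (Nat.eqb_spec n n0); [subst; auto|].
      apply tin_var. destruct (Ht s n) as [E|E]; [apply tfree_var; auto| |auto]. congruence.
    + apply tin_var. destruct (Ht s n) as [E|E]; [apply tfree_var; auto| |auto]. congruence.
  - apply tin_F0; auto using tin_F0_inv.
  - apply tin_F1_inv in Ht; destruct Ht; apply tin_F1; auto.
  - apply tin_F2; auto using tin_F2_inv.
  - apply tin_F3; auto using tin_F3_inv.
Qed.

Lemma ext_in M N (v : valuation M) (w : valuation N) V s n (u : term s) :
  approx v w V -> tin V u ->
  approx (upd v s n (teval v u)) (upd w s n (teval w u)) ((s,n)::V).
Proof.
  intros H Hu s' t1 t2 H1 H2.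
  rewrite !tsubst_eval. apply H; apply tsubst_tin; auto.
Qed.

Definition NF0 (V : list (sort*nat)) : list (term S0) :=
  flat_map (fun p => match p with (S0, i) => [tvar S0 i] | (S1, j) => [tF0 (tvar S1 j)]
                              | (S2, k) => [tF3 (tvar S2 k)] end) V.
Definition NF2 V : list (term S2) :=
  flat_map (fun p => match p with (S2, k) => [tvar S2 k] | _ => [] end) V ++ map tF2 (NF0 V).
Definition NF1 V : list (term S1) :=
  flat_map (fun p => match p with (S1, j) => [tvar S1 j] | _ => [] end) V ++
  flat_map (fun a => map (fun b => tF1 a b) (NF0 V)) (NF2 V).
Definition NF s V : list (term s) :=
  match s with S0 => NF0 V | S1 => NF1 V | S2 => NF2 V end.

Definition nfF0 (t : term S1) : term S0 :=
  match t in term s return (match s with S1 => term S0 | _ => unit end) with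
  | tvar s j => match s as s0 return (match s0 with S1 => term S0 | _ => unit end) with
                | S1 => tF0 (tvar S1 j) | _ => tt end
  | tF1 _ b => b
  | _ => tt
  end.
Definition nfF3 (t : term S2) : term S0 :=
  match t in term s return (match s with S2 => term S0 | _ => unit end) with
  | tvar s j => match s as s0 return (match s0 with S2 => term S0 | _ => unit end) with
                | S2 => tF3 (tvar S2 j) | _ => tt end
  | tF2 c => c
  | _ => tt
  end.

Fixpoint nf s (t : term s) : term s :=
  match t in term s0 return term s0 with
  | tvar s i => tvar s i
  | tF0 t1 => nfF0 (nf t1)
  | tF1 a b => tF1 (nf a) (nf b)
  | tF2 a => tF2 (nf a)
  | tF3 a => nfF3 (nf a)
  end.

Lemma nfF0_eval M (v : valuation M) : T0 M -> forall u, teval v (nfF0 u) = fn0 M (teval v u).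
Proof.
  intros [H0 H3].
  assert (forall s (u : term s), match s return term s -> Prop with
            S1 => fun u => teval v (nfF0 u) = fn0 M (teval v u) | _ => fun _ => True end u).
  { intros s u; destruct u; simpl; auto. destruct s; simpl; auto. }
  intro u; apply (H S1 u).
Qed.
Lemma nfF3_eval M (v : valuation M) : T0 M -> forall u, teval v (nfF3 u) = fn3 M (teval v u).
Proof.
  intros [H0 H3].
  assert (forall s (u : term s), match s return term s -> Prop with
            S2 => fun u => teval v (nfF3 u) = fn3 M (teval v u) | _ => fun _ => True end u).
  { intros s u; destruct u; simpl; auto. destruct s; simpl; auto. }
  intro u; apply (H S2 u).
Qed.

Lemma nf_eval M (v : valuation M) : T0 M -> forall s (t : term s), teval v (nf t) = teval v t.
Proof.
  intros HM s t; induction t; simpl; auto.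
  - rewrite nfF0_eval; congruence.
  - congruence.
  - congruence.
  - rewrite nfF3_eval; congruence.
Qed.

Lemma NF0_inv V u : In u (NF0 V) ->
  (exists i, u = tvar S0 i /\ In (S0,i) V) \/ (exists j, u = tF0 (tvar S1 j) /\ In (S1,j) V)
  \/ (exists k, u = tF3 (tvar S2 k) /\ In (S2,k) V).
Proof.
  unfold NF0; rewrite in_flat_map; intros ((s,i)&Hi&Hu).
  destruct s; simpl in Hu; destruct Hu as [Hu|[]]; subst; eauto 6.
Qed.
Lemma NF2_inv V u : In u (NF2 V) ->
  (exists k, u = tvar S2 k /\ In (S2,k) V) \/ (exists c, u = tF2 c /\ In c (NF0 V)).
Proof.
  unfold NF2; rewrite in_app_iff, in_flat_map, in_map_iff; intros [((s,i)&Hi&Hu)|(c&Hc&Hi)].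
  - destruct s; simpl in Hu; try tauto. destruct Hu as [Hu|[]]; subst; eauto.
  - right; eauto.
Qed.
Lemma NF1_inv V u : In u (NF1 V) ->
  (exists j, u = tvar S1 j /\ In (S1,j) V) \/
  (exists a b, u = tF1 a b /\ In a (NF2 V) /\ In b (NF0 V)).
Proof.
  unfold NF1; rewrite in_app_iff, !in_flat_map; intros [((s,i)&Hi&Hu)|(a&Ha&Hu)].
  - destruct s; simpl in Hu; try tauto. destruct Hu as [Hu|[]]; subst; eauto.
  - apply in_map_iff in Hu. destruct Hu as (b&<-&Hb). right; eauto.
Qed.

Lemma NF0_var V i : In (S0,i) V -> In (tvar S0 i) (NF0 V).
Proof. intro H; unfold NF0; apply in_flat_map; exists (S0,i); simpl; auto. Qed.
Lemma NF0_F0 V j : In (S1,j) V -> In (tF0 (tvar S1 j)) (NF0 V).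
Proof. intro H; unfold NF0; apply in_flat_map; exists (S1,j); simpl; auto. Qed.
Lemma NF0_F3 V j : In (S2,j) V -> In (tF3 (tvar S2 j)) (NF0 V).
Proof. intro H; unfold NF0; apply in_flat_map; exists (S2,j); simpl; auto. Qed.
Lemma NF2_var V i : In (S2,i) V -> In (tvar S2 i) (NF2 V).
Proof. intro H; unfold NF2; apply in_app_iff; left; apply in_flat_map; exists (S2,i); simpl; auto. Qed.
Lemma NF2_F2 V c : In c (NF0 V) -> In (tF2 c) (NF2 V).
Proof. intro H; unfold NF2; apply in_app_iff; right; apply in_map; auto. Qed.
Lemma NF1_var V i : In (S1,i) V -> In (tvar S1 i) (NF1 V).
Proof. intro H; unfold NF1; apply in_app_iff; left; apply in_flat_map; exists (S1,i); simpl; auto. Qed.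
Lemma NF1_F1 V a b : In a (NF2 V) -> In b (NF0 V) -> In (tF1 a b) (NF1 V).
Proof. intros H1 H2; unfold NF1; apply in_app_iff; right; apply in_flat_map; exists a; split; auto; apply in_map; auto. Qed.

Lemma nf_in V s (t : term s) : tin V t -> In (nf t) (NF s V).
Proof.
  induction t; intro H.
  - simpl. assert (In (s,n) V) by (apply H; apply tfree_var; auto).
    destruct s; simpl; auto using NF0_var, NF1_var, NF2_var.
  - simpl. specialize (IHt (tin_F0_inv H)). simpl in IHt.
    apply NF1_inv in IHt. destruct IHt as [(j&->&Hj)|(a&b&->&Ha&Hb)]; simpl; auto using NF0_F0.
  - apply tin_F1_inv in H; destruct H. simpl. apply NF1_F1; [apply (IHt1 H)|apply (IHt2 H0)].
  - simpl. apply NF2_F2. apply (IHt (tin_F2_inv H)).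
  - simpl. specialize (IHt (tin_F3_inv H)). simpl in IHt.
    apply NF2_inv in IHt. destruct IHt as [(j&->&Hj)|(c&->&Hc)]; simpl; auto using NF0_F3.
Qed.

Lemma NF_tin V s u : In u (NF s V) -> tin V u.
Proof.
  assert (H0 : forall u, In u (NF0 V) -> tin V u).
  { intros u0 Hu; apply NF0_inv in Hu; destruct Hu as [(i&->&Hi)|[(i&->&Hi)|(i&->&Hi)]];
    auto using tin_var, tin_F0, tin_F3. }
  assert (H2 : forall u, In u (NF2 V) -> tin V u).
  { intros u0 Hu; apply NF2_inv in Hu; destruct Hu as [(i&->&Hi)|(c&->&Hc)]; auto using tin_var, tin_F2. }
  destruct s; simpl; auto.
  intros Hu; apply NF1_inv in Hu; destruct Hu as [(i&->&Hi)|(a&b&->&Ha&Hb)]; auto using tin_var, tin_F1.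
Qed.

Definition atoms_s s (V : list (sort*nat)) : list form :=
  map (fun p => fEq (fst p) (snd p)) (list_prod (NF s V) (NF s V)).
Definition atoms V : list form := atoms_s S0 V ++ atoms_s S1 V ++ atoms_s S2 V.

Definition fTrue := fNot fFalse.

Fixpoint patterns (l : list form) : list form :=
  match l with
  | [] => [fTrue]
  | a :: r => map (fun f => fAnd a f) (patterns r) ++ map (fun f => fAnd (fNot a) f) (patterns r)
  end.

Lemma patterns_cover M (v : valuation M) l : exists f, In f (patterns l) /\ sat v f.
Proof.
  induction l as [|a r IH]; simpl.
  - exists fTrue; simpl; auto.
  - destruct IH as (f&Hf&Hs). destruct (classic (sat v a)).
    + exists (fAnd a f); split; [apply in_app_iff; left; apply in_map; auto|simpl; auto].
    + exists (fAnd (fNot a) f); split; [apply in_app_iff; right; apply in_map; auto|simpl; auto].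
Qed.

Lemma patterns_agree M N (v : valuation M) (w : valuation N) l f :
  In f (patterns l) -> sat v f -> sat w f -> forall a, In a l -> (sat v a <-> sat w a).
Proof.
  revert f; induction l as [|b r IH]; simpl; intros f Hf Hv Hw a Ha; [tauto|].
  apply in_app_iff in Hf; destruct Hf as [Hf|Hf]; apply in_map_iff in Hf; destruct Hf as (g&<-&Hg);
  simpl in Hv, Hw; destruct Ha as [<-|Ha]; try tauto; eapply IH; eauto; tauto.
Qed.

Lemma patterns_transfer M N (v : valuation M) (w : valuation N) l f :
  In f (patterns l) -> sat v f -> (forall a, In a l -> (sat v a <-> sat w a)) -> sat w f.
Proof.
  revert f; induction l as [|b r IH]; simpl; intros f Hf Hv Ha.
  - destruct Hf as [<-|[]]; simpl; auto.
  - apply in_app_iff in Hf; destruct Hf as [Hf|Hf]; apply in_map_iff in Hf; destruct Hf as (g&<-&Hg);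
    simpl in Hv |- *; split; try (eapply IH; eauto; tauto).
    + apply Ha; tauto.
    + rewrite <- Ha; tauto.
Qed.

Lemma patterns_qfree l f : In f (patterns l) -> (forall a, In a l -> qfree a = true) -> qfree f = true.
Proof.
  revert f; induction l as [|b r IH]; simpl; intros f Hf Ha.
  - destruct Hf as [<-|[]]; reflexivity.
  - apply in_app_iff in Hf; destruct Hf as [Hf|Hf]; apply in_map_iff in Hf; destruct Hf as (g&<-&Hg);
    simpl; rewrite Ha, IH; auto.
Qed.

Lemma patterns_free l f s n : In f (patterns l) -> ffree s n f = true -> exists a, In a l /\ ffree s n a = true.
Proof.
  revert f; induction l as [|b r IH]; simpl; intros f Hf Hff.
  - destruct Hf as [<-|[]]; discriminate.
  - apply in_app_iff in Hf; destruct Hf as [Hf|Hf]; apply in_map_iff in Hf; destruct Hf as (g&<-&Hg);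
    simpl in Hff; apply orb_true_iff in Hff; destruct Hff as [H|H]; eauto;
    destruct (IH g Hg H) as (a&?&?); eauto.
Qed.

Lemma atoms_qfree V a : In a (atoms V) -> qfree a = true.
Proof.
  unfold atoms, atoms_s; rewrite !in_app_iff, !in_map_iff.
  intros [(p&<-&_)|[(p&<-&_)|(p&<-&_)]]; reflexivity.
Qed.

Lemma atoms_free V a s n : In a (atoms V) -> ffree s n a = true -> In (s,n) V.
Proof.
  unfold atoms, atoms_s; rewrite !in_app_iff, !in_map_iff.
  intros [((t1,t2)&<-&Hp)|[((t1,t2)&<-&Hp)|((t1,t2)&<-&Hp)]]; apply in_prod_iff in Hp; destruct Hp as [Ha Hb];
  simpl; intro Hf; apply orb_true_iff in Hf; destruct Hf as [Hx|Hx];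
  first [apply (NF_tin _ _ Ha); exact Hx | apply (NF_tin _ _ Hb); exact Hx].
Qed.

Lemma approx_of_agree M N (v : valuation M) (w : valuation N) V : T0 M -> T0 N ->
  (forall a, In a (atoms V) -> (sat v a <-> sat w a)) -> approx v w V.
Proof.
  intros HM HN H s t1 t2 H1 H2.
  rewrite <- (nf_eval v HM t1), <- (nf_eval v HM t2), <- (nf_eval w HN t1), <- (nf_eval w HN t2).
  apply (H (fEq (nf t1) (nf t2))).
  unfold atoms, atoms_s; rewrite !in_app_iff.
  assert (Hp : In (nf t1, nf t2) (list_prod (NF s V) (NF s V))) by (apply in_prod; apply nf_in; auto).
  destruct s; [left|right;left|right;right]; apply in_map_iff; exists (nf t1, nf t2); split; auto.
Qed.

Lemma agree_of_approx M N (v : valuation M) (w : valuation N) V :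
  approx v w V -> forall a, In a (atoms V) -> (sat v a <-> sat w a).
Proof.
  intros H a. unfold atoms, atoms_s; rewrite !in_app_iff, !in_map_iff.
  intros [((t1,t2)&<-&Hp)|[((t1,t2)&<-&Hp)|((t1,t2)&<-&Hp)]]; apply in_prod_iff in Hp; destruct Hp;
  simpl; apply H; eapply NF_tin; eauto.
Qed.

Definition Rich (N : structure) : Prop :=
  forall (M : structure) (v : valuation M) (w : valuation N) V s n (a : car M s) (L : list (car N s)),
    T0 M -> approx v w V -> (forall t : term s, tin V t -> teval v t <> a) ->
    exists b, ~ In b L /\ approx (upd v s n a) (upd w s n b) ((s,n)::V).

Lemma rich_basic N : Rich N -> forall M (v : valuation M) (w : valuation N) V s n (a : car M s),
  T0 M -> approx v w V -> exists b, approx (upd v s n a) (upd w s n b) ((s,n)::V).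
Proof.
  intros HR M v w V s n a HM Hvw.
  destruct (classic (exists t : term s, tin V t /\ teval v t = a)) as [(t&Ht&<-)|Hn].
  - exists (teval w t). apply ext_in; auto.
  - destruct (HR M v w V s n a [] HM Hvw) as (b&_&Hb).
    + intros t Ht E; apply Hn; eauto.
    + eauto.
Qed.

Lemma ffree_bind s n p s' m V :
  (forall s0 n0, negb (sort_eqb s0 s && Nat.eqb n0 n) && ffree s0 n0 p = true -> In (s0,n0) V) ->
  ffree s' m p = true -> In (s',m) ((s,n)::V).
Proof.
  intros H Hf. destruct (sort_eq_dec s' s) as [e|e]; [destruct (Nat.eq_dec m n) as [e'|e']|].
  - subst; left; auto.
  - right; apply H. rewrite Hf. subst. rewrite sort_eqb_refl. simpl.
    apply Nat.eqb_neq in e'. rewrite e'. reflexivity.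
  - right; apply H. rewrite Hf. unfold sort_eqb. destruct (sort_eq_dec s' s); [congruence|reflexivity].
Qed.

Lemma key phi : forall M N, T0 M -> T0 N -> Rich M -> Rich N ->
  forall V (v : valuation M) (w : valuation N),
  (forall s n, ffree s n phi = true -> In (s,n) V) -> approx v w V -> (sat v phi <-> sat w phi).
Proof.
  induction phi; intros M N HM HN RM RN V v w Hf Hvw; simpl.
  - apply Hvw; intros s' m H; apply Hf; simpl; rewrite H; auto using orb_true_r.
  - tauto.
  - rewrite (IHphi M N HM HN RM RN V v w); auto; tauto.
  - rewrite (IHphi1 M N HM HN RM RN V v w), (IHphi2 M N HM HN RM RN V v w); try tauto;
      intros; apply Hf; simpl; rewrite H; auto using orb_true_r.
  - rewrite (IHphi1 M N HM HN RM RN V v w), (IHphi2 M N HM HN RM RN V v w); try tauto;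
      intros; apply Hf; simpl; rewrite H; auto using orb_true_r.
  - rewrite (IHphi1 M N HM HN RM RN V v w), (IHphi2 M N HM HN RM RN V v w); try tauto;
      intros; apply Hf; simpl; rewrite H; auto using orb_true_r.
  - assert (Hf' : forall s' m, ffree s' m phi = true -> In (s',m) ((s,n)::V)) by
      (intros; eapply ffree_bind; eauto).
    split.
    + intros (a&Ha). destruct (@rich_basic N RN M v w V s n a HM Hvw) as (b&Hb).
      exists b. exact (proj1 (IHphi M N HM HN RM RN _ _ _ Hf' Hb) Ha).
    + intros (b&Hb). destruct (@rich_basic M RM N w v V s n b HN (approx_sym Hvw)) as (a&Ha).
      exists a. exact (proj2 (IHphi M N HM HN RM RN _ _ _ Hf' (approx_sym Ha)) Hb).
  - assert (Hf' : forall s' m, ffree s' m phi = true -> In (s',m) ((s,n)::V)) by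
      (intros; eapply ffree_bind; eauto).
    split.
    + intros H b. destruct (@rich_basic M RM N w v V s n b HN (approx_sym Hvw)) as (a&Ha).
      exact (proj1 (IHphi M N HM HN RM RN _ _ _ Hf' (approx_sym Ha)) (H a)).
    + intros H a. destruct (@rich_basic N RN M v w V s n a HM Hvw) as (b&Hb).
      exact (proj2 (IHphi M N HM HN RM RN _ _ _ Hf' Hb) (H b)).
Qed.

Fixpoint tvars s (t : term s) : list (sort*nat) :=
  match t with
  | tvar s m => [(s,m)]
  | tF0 t1 => tvars t1
  | tF1 t1 t2 => tvars t1 ++ tvars t2
  | tF2 t1 => tvars t1
  | tF3 t1 => tvars t1
  end.

Lemma tvars_spec s (t : term s) s' m : tfree s' m t = true <-> In (s',m) (tvars t).
Proof.
  induction t; simpl; auto.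
  - rewrite andb_true_iff, sort_eqb_true, Nat.eqb_eq. split; [intros [-> ->]; auto|intros [E|[]]; inversion E; auto].
  - rewrite orb_true_iff, in_app_iff, IHt1, IHt2; tauto.
Qed.

Fixpoint fvlist (phi : form) : list (sort*nat) :=
  match phi with
  | fEq t1 t2 => tvars t1 ++ tvars t2
  | fFalse => []
  | fNot p => fvlist p
  | fAnd p q | fOr p q | fImp p q => fvlist p ++ fvlist q
  | fEx s n p | fAll s n p => filter (fun x => negb (sort_eqb (fst x) s && Nat.eqb (snd x) n)) (fvlist p)
  end.

Lemma fvlist_spec phi s n : ffree s n phi = true <-> In (s,n) (fvlist phi).
Proof.
  induction phi; simpl;
    try (rewrite orb_true_iff, in_app_iff; try rewrite IHphi1, IHphi2; try rewrite !tvars_spec; tauto).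
  - split; [discriminate|tauto].
  - auto.
  - rewrite filter_In, andb_true_iff, IHphi; simpl; tauto.
  - rewrite filter_In, andb_true_iff, IHphi; simpl; tauto.
Qed.

Lemma eq_sym_iff {A} (x y : A) : x = y <-> y = x.
Proof. split; auto. Qed.

Section KSec.
Variables (M N : structure) (v : valuation M) (w : valuation N) (W : list (sort*nat))
  (K : forall s, car M s -> car N s -> Prop).
Hypothesis Hvar : forall s m, In (s,m) W -> K s (v s m) (w s m).
Hypothesis H0 : forall a b, K S1 a b -> K S0 (fn0 M a) (fn0 N b).
Hypothesis H1 : forall z z' c c', K S2 z z' -> K S0 c c' -> K S1 (fn1 M z c) (fn1 N z' c').
Hypothesis H2 : forall c c', K S0 c c' -> K S2 (fn2 M c) (fn2 N c').
Hypothesis H3 : forall z z', K S2 z z' -> K S0 (fn3 M z) (fn3 N z').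
Hypothesis Hbij : forall s a b a' b', K s a b -> K s a' b' -> (a = a' <-> b = b').

Lemma termK s (t : term s) : tin W t -> K s (teval v t) (teval w t).
Proof.
  induction t; simpl; intro Ht.
  - apply Hvar, Ht, tfree_var; auto.
  - apply H0, IHt, tin_F0_inv, Ht.
  - apply tin_F1_inv in Ht; destruct Ht; apply H1; auto.
  - apply H2, IHt, tin_F2_inv, Ht.
  - apply H3, IHt, tin_F3_inv, Ht.
Qed.

Lemma approx_of_K : approx v w W.
Proof. intros s t1 t2 Ht1 Ht2. apply Hbij; apply termK; auto. Qed.
End KSec.

Definition K0 M N (v : valuation M) (w : valuation N) V s (m : car M s) (n' : car N s) :=
  exists t : term s, tin V t /\ m = teval v t /\ n' = teval w t.

Lemma K0_bij M N (v : valuation M) (w : valuation N) V s m n' m' n'' :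
  approx v w V -> K0 v w V s m n' -> K0 v w V s m' n'' -> (m = m' <-> n' = n'').
Proof. intros H (t&Ht&->&->) (t'&Ht'&->&->). apply H; auto. Qed.

Lemma K0_var M N (v : valuation M) (w : valuation N) V s n a b s' m :
  In (s',m) ((s,n)::V) -> (s',m) <> (s,n) -> K0 v w V s' (upd v s n a s' m) (upd w s n b s' m).
Proof.
  intros [E|Hi] Hne; [congruence|].
  exists (tvar s' m); split; [apply tin_var; auto|]. simpl. rewrite !upd_other; auto.
Qed.

Ltac K0F f := match goal with
  | H : K0 _ _ _ _ _ _ |- _ => let t := fresh "t" in let Ht := fresh "Ht" in
      destruct H as (t&Ht&->&->); exists (f t); split; [|split; reflexivity] end.

Definition oval M (v : valuation M) (d : car M S2) (o : option (term S2)) :=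
  match o with None => d | Some t => teval v t end.
Definition oin V (o : option (term S2)) := match o with None => True | Some t => tin V t end.

Section E0.
Variables (M N : structure) (v : valuation M) (w : valuation N) (V : list (sort*nat)) (n : nat)
  (a : car M S0) (b : car N S0).
Hypotheses (HM : T0 M) (HN : T0 N) (Hvw : approx v w V) (Hn : ~ In (S0,n) V)
  (Ha : forall t, tin V t -> teval v t <> a) (Hb : forall t, tin V t -> teval w t <> b)
  (HA : forall t0 t1, tin V t0 -> tin V t1 ->
     (fn1 M (fn2 M a) (teval v t0) = teval v t1 <-> fn1 N (fn2 N b) (teval w t0) = teval w t1))
  (HB : forall o o', oin V o -> oin V o' ->
     (fn1 M (oval v (fn2 M a) o) a = fn1 M (oval v (fn2 M a) o') a <->
      fn1 N (oval w (fn2 N b) o) b = fn1 N (oval w (fn2 N b) o') b)).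

Definition KE0 s : car M s -> car N s -> Prop :=
  match s return car M s -> car N s -> Prop with
  | S0 => fun m m' => K0 v w V S0 m m' \/ (m = a /\ m' = b)
  | S2 => fun m m' => K0 v w V S2 m m' \/ (m = fn2 M a /\ m' = fn2 N b)
  | S1 => fun m m' => K0 v w V S1 m m' \/
      (exists t0, tin V t0 /\ m = fn1 M (fn2 M a) (teval v t0) /\ m' = fn1 N (fn2 N b) (teval w t0)) \/
      (exists o, oin V o /\ m = fn1 M (oval v (fn2 M a) o) a /\ m' = fn1 N (oval w (fn2 N b) o) b)
  end.

Lemma ext_E0 : approx (upd v S0 n a) (upd w S0 n b) ((S0,n)::V).
Proof.
  destruct HM as [HM0 HM3]; destruct HN as [HN0 HN3].
  apply approx_of_K with (K := KE0).
  - intros s m Hi. destruct (classic ((s,m) = (S0,n))) as [E|E].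
    + inversion E; subst. simpl. rewrite !upd_same. auto.
    + pose proof (@K0_var M N v w V S0 n a b s m Hi E) as HK. destruct s; simpl; auto.
  - intros x y [HK|[(t0&Ht0&->&->)|(o&Ho&->&->)]]; simpl.
    + left; K0F tF0; apply tin_F0; auto.
    + left; exists t0; split; auto.
    + right; auto.
  - intros z z' c c' [Hz|[-> ->]] [Hc|[-> ->]]; simpl.
    + left. destruct Hz as (t2&Ht2&->&->); destruct Hc as (t0&Ht0&->&->).
      exists (tF1 t2 t0); split; [apply tin_F1; auto|split; reflexivity].
    + right; right. destruct Hz as (t2&Ht2&->&->). exists (Some t2); simpl; auto.
    + right; left. destruct Hc as (t0&Ht0&->&->). exists t0; auto.
    + right; right. exists None; simpl; auto.
  - intros c c' [Hc|[-> ->]]; simpl; [left; K0F tF2; apply tin_F2; auto|right; auto].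
  - intros z z' [Hz|[-> ->]]; simpl; [left; K0F tF3; apply tin_F3; auto|right; auto].
  - intros s; destruct s; simpl.
    + intros x y x' y' [Hx|[-> ->]] [Hx'|[-> ->]].
      * eapply K0_bij; eauto.
      * destruct Hx as (t&Ht&->&->). split; intro E; [elim (Ha Ht E)|elim (Hb Ht E)].
      * destruct Hx' as (t&Ht&->&->). split; intro E; [elim (Ha Ht (eq_sym E))|elim (Hb Ht (eq_sym E))].
      * tauto.
    + intros x y x' y' [Hx|[(t0&Ht0&->&->)|(o&Ho&->&->)]] [Hx'|[(t0'&Ht0'&->&->)|(o'&Ho'&->&->)]].
      * eapply K0_bij; eauto.
      * destruct Hx as (t&Ht&->&->). rewrite (@eq_sym_iff _ (teval v t)), (@eq_sym_iff _ (teval w t)). apply HA; auto.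
      * destruct Hx as (t&Ht&->&->). split; intro E.
        -- elim (Ha (tin_F0 Ht)). simpl. rewrite E, HM0. reflexivity.
        -- elim (Hb (tin_F0 Ht)). simpl. rewrite E, HN0. reflexivity.
      * destruct Hx' as (t&Ht&->&->). apply HA; auto.
      * split; intro E.
        -- apply (f_equal (fn0 M)) in E. rewrite !HM0 in E. apply Hvw in E; auto. simpl; rewrite E; auto.
        -- apply (f_equal (fn0 N)) in E. rewrite !HN0 in E. apply Hvw in E; auto. simpl; rewrite E; auto.
      * split; intro E.
        -- apply (f_equal (fn0 M)) in E. rewrite !HM0 in E. elim (Ha Ht0 E).
        -- apply (f_equal (fn0 N)) in E. rewrite !HN0 in E. elim (Hb Ht0 E).
      * destruct Hx' as (t&Ht&->&->). split; intro E.
        -- elim (Ha (tin_F0 Ht)). simpl. rewrite <- E, HM0. reflexivity.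
        -- elim (Hb (tin_F0 Ht)). simpl. rewrite <- E, HN0. reflexivity.
      * split; intro E.
        -- apply (f_equal (fn0 M)) in E. rewrite !HM0 in E. elim (Ha Ht0' (eq_sym E)).
        -- apply (f_equal (fn0 N)) in E. rewrite !HN0 in E. elim (Hb Ht0' (eq_sym E)).
      * apply HB; auto.
    + intros x y x' y' [Hx|[-> ->]] [Hx'|[-> ->]].
      * eapply K0_bij; eauto.
      * destruct Hx as (t&Ht&->&->). split; intro E.
        -- elim (Ha (tin_F3 Ht)). simpl. rewrite E, HM3. reflexivity.
        -- elim (Hb (tin_F3 Ht)). simpl. rewrite E, HN3. reflexivity.
      * destruct Hx' as (t&Ht&->&->). split; intro E.
        -- elim (Ha (tin_F3 Ht)). simpl. rewrite <- E, HM3. reflexivity.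
        -- elim (Hb (tin_F3 Ht)). simpl. rewrite <- E, HN3. reflexivity.
      * tauto.
Qed.
End E0.

Section E1.
Variables (M N : structure) (v : valuation M) (w : valuation N) (V : list (sort*nat)) (n : nat)
  (a : car M S1) (b : car N S1) (ta : term S0).
Hypotheses (HM : T0 M) (HN : T0 N) (Hvw : approx v w V) (Hn : ~ In (S1,n) V) (Hta : tin V ta)
  (Ea : fn0 M a = teval v ta) (Eb : fn0 N b = teval w ta)
  (Ha : forall t, tin V t -> teval v t <> a) (Hb : forall t, tin V t -> teval w t <> b).

Definition KE1 s : car M s -> car N s -> Prop :=
  match s return car M s -> car N s -> Prop with
  | S1 => fun m m' => K0 v w V S1 m m' \/ (m = a /\ m' = b)
  | s => fun m m' => K0 v w V s m m'
  end.

Lemma ext_E1 : approx (upd v S1 n a) (upd w S1 n b) ((S1,n)::V).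
Proof.
  apply approx_of_K with (K := KE1).
  - intros s m Hi. destruct (classic ((s,m) = (S1,n))) as [E|E].
    + inversion E; subst. simpl. rewrite !upd_same. auto.
    + pose proof (@K0_var M N v w V S1 n a b s m Hi E) as HK. destruct s; simpl; auto.
  - intros x y [HK|[-> ->]]; simpl.
    + K0F tF0; apply tin_F0; auto.
    + exists ta; auto.
  - intros z z' c c' Hz Hc; simpl in *. left.
    destruct Hz as (t2&Ht2&->&->); destruct Hc as (t0&Ht0&->&->).
    exists (tF1 t2 t0); split; [apply tin_F1; auto|split; reflexivity].
  - intros c c' Hc; simpl in *; K0F tF2; apply tin_F2; auto.
  - intros z z' Hz; simpl in *; K0F tF3; apply tin_F3; auto.
  - intros s; destruct s; simpl.
    + intros; eapply K0_bij; eauto.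
    + intros x y x' y' [Hx|[-> ->]] [Hx'|[-> ->]].
      * eapply K0_bij; eauto.
      * destruct Hx as (t&Ht&->&->). split; intro E; [elim (Ha Ht E)|elim (Hb Ht E)].
      * destruct Hx' as (t&Ht&->&->). split; intro E; [elim (Ha Ht (eq_sym E))|elim (Hb Ht (eq_sym E))].
      * tauto.
    + intros; eapply K0_bij; eauto.
Qed.
End E1.

Section E2.
Variables (M N : structure) (v : valuation M) (w : valuation N) (V : list (sort*nat)) (n : nat)
  (a : car M S2) (b : car N S2) (tx : term S0).
Hypotheses (HM : T0 M) (HN : T0 N) (Hvw : approx v w V) (Hn : ~ In (S2,n) V) (Htx : tin V tx)
  (Ea : fn3 M a = teval v tx) (Eb : fn3 N b = teval w tx)
  (Ha : forall t, tin V t -> teval v t <> a) (Hb : forall t, tin V t -> teval w t <> b)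
  (HA : forall t0 t1, tin V t0 -> tin V t1 ->
     (fn1 M a (teval v t0) = teval v t1 <-> fn1 N b (teval w t0) = teval w t1)).

Definition KE2 s : car M s -> car N s -> Prop :=
  match s return car M s -> car N s -> Prop with
  | S0 => fun m m' => K0 v w V S0 m m'
  | S2 => fun m m' => K0 v w V S2 m m' \/ (m = a /\ m' = b)
  | S1 => fun m m' => K0 v w V S1 m m' \/
      (exists t0, tin V t0 /\ m = fn1 M a (teval v t0) /\ m' = fn1 N b (teval w t0))
  end.

Lemma ext_E2 : approx (upd v S2 n a) (upd w S2 n b) ((S2,n)::V).
Proof.
  destruct HM as [HM0 HM3]; destruct HN as [HN0 HN3].
  apply approx_of_K with (K := KE2).
  - intros s m Hi. destruct (classic ((s,m) = (S2,n))) as [E|E].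
    + inversion E; subst. simpl. rewrite !upd_same. auto.
    + pose proof (@K0_var M N v w V S2 n a b s m Hi E) as HK. destruct s; simpl; auto.
  - intros x y [HK|(t0&Ht0&->&->)]; simpl.
    + K0F tF0; apply tin_F0; auto.
    + exists t0; rewrite HM0, HN0; auto.
  - intros z z' c c' [Hz|[-> ->]] Hc; simpl.
    + left. destruct Hz as (t2&Ht2&->&->); destruct Hc as (t0&Ht0&->&->).
      exists (tF1 t2 t0); split; [apply tin_F1; auto|split; reflexivity].
    + right. destruct Hc as (t0&Ht0&->&->). exists t0; auto.
  - intros c c' Hc; simpl in *; left; K0F tF2; apply tin_F2; auto.
  - intros z z' [Hz|[-> ->]]; simpl; [K0F tF3; apply tin_F3; auto|exists tx; auto].
  - intros s; destruct s; simpl.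
    + intros; eapply K0_bij; eauto.
    + intros x y x' y' [Hx|(t0&Ht0&->&->)] [Hx'|(t0'&Ht0'&->&->)].
      * eapply K0_bij; eauto.
      * destruct Hx as (t&Ht&->&->). rewrite (@eq_sym_iff _ (teval v t)), (@eq_sym_iff _ (teval w t)). apply HA; auto.
      * destruct Hx' as (t&Ht&->&->). apply HA; auto.
      * split; intro E.
        -- apply (f_equal (fn0 M)) in E. rewrite !HM0 in E. apply Hvw in E; auto. simpl; rewrite E; auto.
        -- apply (f_equal (fn0 N)) in E. rewrite !HN0 in E. apply Hvw in E; auto. simpl; rewrite E; auto.
    + intros x y x' y' [Hx|[-> ->]] [Hx'|[-> ->]].
      * eapply K0_bij; eauto.
      * destruct Hx as (t&Ht&->&->). split; intro E; [elim (Ha Ht E)|elim (Hb Ht E)].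
      * destruct Hx' as (t&Ht&->&->). split; intro E; [elim (Ha Ht (eq_sym E))|elim (Hb Ht (eq_sym E))].
      * tauto.
Qed.
End E2.

Definition edec {X} (x y : X) : {x = y} + {x <> y} := excluded_middle_informative (x = y).

Fixpoint cfind {X} (p : X -> Prop) (l : list X) : option X :=
  match l with
  | [] => None
  | x :: r => if excluded_middle_informative (p x) then Some x else cfind p r
  end.

Lemma cfind_some X (p : X -> Prop) l x : cfind p l = Some x -> In x l /\ p x.
Proof.
  induction l as [|y r IH]; simpl; [discriminate|].
  destruct (excluded_middle_informative (p y)); [intro E; inversion E; subst; auto|].
  intro E; destruct (IH E); auto.
Qed.
Lemma cfind_none X (p : X -> Prop) l : cfind p l = None -> forall x, In x l -> ~ p x.
Proof.
  induction l as [|y r IH]; simpl; [tauto|].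
  destruct (excluded_middle_informative (p y)); [discriminate|].
  intros E x [<-|Hx]; auto.
Qed.
Lemma cfind_ext X (p q : X -> Prop) l : (forall x, p x <-> q x) -> cfind p l = cfind q l.
Proof.
  intro H; induction l as [|y r IH]; simpl; auto.
  destruct (excluded_middle_informative (p y)), (excluded_middle_informative (q y)); auto;
    exfalso; firstorder.
Qed.

Fixpoint cindex {X} (p : X -> Prop) (l : list X) : nat :=
  match l with
  | [] => 0
  | x :: r => if excluded_middle_informative (p x) then 0 else S (cindex p r)
  end.

Lemma cindex_correct X (p : X -> Prop) l : (exists x, In x l /\ p x) ->
  exists x, nth_error l (cindex p l) = Some x /\ p x.
Proof.
  induction l as [|y r IH]; simpl; [firstorder|].
  destruct (excluded_middle_informative (p y)); [intros _; exists y; auto|].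
  intros (x&[<-|Hx]&Hp); [contradiction|]. apply IH; eauto.
Qed.

Definition presc {N : structure} (y' : car N S1) (o : option (car N S1)) (L1 : list (car N S1)) : Prop :=
  match o with Some y => y' = y | None => ~ In y' L1 end.
Definition functional {X Y} (P : list (X * Y)) := forall c o o', In (c,o) P -> In (c,o') P -> o = o'.

Definition R1 N := forall (c : car N S0) (L : list (car N S1)), exists b, fn0 N b = c /\ ~ In b L.
Definition R2 N := forall c0 (L2 : list (car N S2)) (L1 : list (car N S1))
  (P : list (car N S0 * option (car N S1))),
  functional P -> (forall c y, In (c, Some y) P -> fn0 N y = c) ->
  exists b, fn3 N b = c0 /\ ~ In b L2 /\ (forall c o, In (c,o) P -> presc (fn1 N b c) o L1).
Definition R0 N := forall (L0 : list (car N S0)) (L1 : list (car N S1))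
  (P : list (car N S0 * option (car N S1))) (Lab : list (car N S2 * nat)) (l0 : nat),
  functional P -> (forall c y, In (c, Some y) P -> fn0 N y = c) -> (forall c o, In (c,o) P -> In c L0) ->
  functional Lab -> (forall z l, In (z,l) Lab -> In (fn3 N z) L0) ->
  exists b, ~ In b L0 /\ (forall c o, In (c,o) P -> presc (fn1 N (fn2 N b) c) o L1) /\
    (forall z l z' l', In (z,l) ((fn2 N b, l0)::Lab) -> In (z',l') ((fn2 N b, l0)::Lab) ->
       (fn1 N z b = fn1 N z' b <-> l = l')).

Section Prod.
Variables (M N : structure) (v : valuation M) (w : valuation N) (V : list (sort*nat)).
Hypotheses (HM : T0 M) (HN : T0 N) (Hvw : approx v w V).

Lemma in_map_nf s (t : term s) : tin V t -> In (teval w t) (map (fun u => teval w u) (NF s V)).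
Proof. intro Ht. rewrite <- (nf_eval w HN t). apply in_map, nf_in, Ht. Qed.

Lemma not_in_C s (b : car N s) L : ~ In b (map (fun u => teval w u) (NF s V) ++ L) ->
  forall t, tin V t -> teval w t <> b.
Proof. intros Hb t Ht E. apply Hb, in_app_iff; left; rewrite <- E; apply in_map_nf; auto. Qed.

Variable (gM : car M S0 -> car M S1) (gN : car N S0 -> car N S1).
Hypothesis (HgM : forall x, fn0 M (gM x) = x).

Definition optg (t0 : term S0) : option (car N S1) :=
  option_map (fun u => teval w u) (cfind (fun t1 => teval v t1 = gM (teval v t0)) (NF S1 V)).
Definition Pg := map (fun t0 => (teval w t0, optg t0)) (NF S0 V).

Lemma Pg_functional : functional Pg.
Proof.
  intros c o o' H1 H2. unfold Pg in *. apply in_map_iff in H1, H2.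
  destruct H1 as (t0&E1&H1); destruct H2 as (t0'&E2&H2). inversion E1; inversion E2; subst.
  assert (E : teval v t0 = teval v t0') by (apply Hvw; try eapply NF_tin; eauto).
  unfold optg. rewrite E. reflexivity.
Qed.

Lemma Pg_valid : forall c y, In (c, Some y) Pg -> fn0 N y = c.
Proof.
  intros c y H. unfold Pg in H. apply in_map_iff in H. destruct H as (t0&E&Ht0). inversion E; subst.
  unfold optg in H1. destruct (cfind _ _) as [t1|] eqn:Ef; [|discriminate]. inversion H1; subst.
  apply cfind_some in Ef. destruct Ef as [Ht1 Ev].
  assert (Ht1' : tin V t1) by (eapply NF_tin; eauto). assert (Ht0' : tin V t0) by (eapply NF_tin; eauto).
  change (fn0 N (teval w t1)) with (teval w (tF0 t1)).
  apply Hvw; auto using tin_F0. simpl. rewrite Ev, HgM. reflexivity.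
Qed.

Lemma Pg_keys : forall c o, In (c,o) Pg -> In c (map (fun u => teval w u) (NF S0 V)).
Proof. intros c o H. unfold Pg in H. apply in_map_iff in H. destruct H as (t0&E&Ht0). inversion E; apply in_map; auto. Qed.

Lemma presc_HA : (forall c o, In (c,o) Pg -> presc (gN c) o (map (fun u => teval w u) (NF S1 V))) ->
  forall t0 t1, tin V t0 -> tin V t1 -> (gM (teval v t0) = teval v t1 <-> gN (teval w t0) = teval w t1).
Proof.
  intros H t0 t1 Ht0 Ht1.
  assert (Hin : In (teval w (nf t0), optg (nf t0)) Pg) by (unfold Pg; apply in_map_iff; exists (nf t0); split; [reflexivity|apply nf_in; auto]).
  specialize (H _ _ Hin). rewrite (nf_eval w HN) in H. rewrite <- (nf_eval v HM t0).
  unfold optg in H. destruct (cfind _ _) as [t1'|] eqn:Ef; simpl in H.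
  - apply cfind_some in Ef. destruct Ef as [Ht1' Ev]. rewrite H, <- Ev.
    apply Hvw; auto. eapply NF_tin; eauto.
  - split; intro E.
    + exfalso. apply (cfind_none _ _ Ef (nf t1)); [apply nf_in; auto|]. rewrite (nf_eval v HM). auto.
    + exfalso. apply H. rewrite E. apply in_map_nf; auto.
Qed.
End Prod.

Lemma produce_E0 M N (v : valuation M) (w : valuation N) V n a (L : list (car N S0)) :
  T0 M -> T0 N -> R0 N -> approx v w V -> ~ In (S0,n) V -> (forall t, tin V t -> teval v t <> a) ->
  exists b, ~ In b L /\ approx (upd v S0 n a) (upd w S0 n b) ((S0,n)::V).
Proof.
  intros HM HN HR Hvw Hn Ha. pose proof HM as [HM0 HM3]. pose proof HN as [HN0 HN3].
  set (gM := fn1 M (fn2 M a)).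
  set (opts := None :: map Some (NF S2 V)).
  set (labf := fun r => cindex (fun o => fn1 M (oval v (fn2 M a) o) a = r) opts).
  set (Lab := map (fun t2 => (teval w t2, labf (fn1 M (teval v t2) a))) (NF S2 V)).
  destruct (HR (map (fun u => teval w u) (NF S0 V) ++ L) (map (fun u => teval w u) (NF S1 V)) (Pg v w V gM) Lab
     (labf (fn1 M (fn2 M a) a))) as (b&Hb&HP&HL).
  - apply Pg_functional; auto.
  - apply Pg_valid; try assumption; try (intro; apply HM0).
  - intros c o H. apply in_app_iff; left. eapply Pg_keys; eauto.
  - intros z l l' H1 H2. unfold Lab in *. apply in_map_iff in H1, H2.
    destruct H1 as (t2&E1&H1); destruct H2 as (t2'&E2&H2). inversion E1; inversion E2; subst.
    assert (E : teval v t2 = teval v t2') by (apply Hvw; try eapply NF_tin; eauto). rewrite E; auto.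
  - intros z l H. unfold Lab in H. apply in_map_iff in H. destruct H as (t2&E&Ht2). inversion E; subst.
    apply in_app_iff; left. change (fn3 N (teval w t2)) with (teval w (tF3 t2)).
    apply in_map_nf; auto. apply tin_F3. eapply NF_tin; eauto.
  - exists b. split; [intro H; apply Hb, in_app_iff; auto|].
    apply ext_E0; auto.
    + eapply not_in_C; eauto.
    + apply (presc_HA HM HN Hvw gM (fn1 N (fn2 N b))). intros c o H; apply HP; auto.
    + assert (Hkey : forall o, oin V o -> In (oval w (fn2 N b) o, labf (fn1 M (oval v (fn2 M a) o) a))
                                             ((fn2 N b, labf (fn1 M (fn2 M a) a)) :: Lab)).
      { intros [t2|] Ho; simpl in *; auto. right. unfold Lab. apply in_map_iff. exists (nf t2).
        rewrite (nf_eval w HN), (nf_eval v HM). split; auto. apply nf_in; auto. }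
      assert (Hhit : forall o, oin V o -> exists x, In x opts /\ fn1 M (oval v (fn2 M a) x) a = fn1 M (oval v (fn2 M a) o) a).
      { intros [t2|] Ho; simpl in *.
        - exists (Some (nf t2)). split; [right; apply in_map, nf_in; auto|simpl; rewrite (nf_eval v HM); auto].
        - exists None; simpl; auto. }
      intros o o' Ho Ho'. rewrite (HL _ _ _ _ (Hkey o Ho) (Hkey o' Ho')).
      split; [intro E; rewrite E; auto|intro E].
      destruct (cindex_correct _ _ (Hhit o Ho)) as (x&Ex&Px).
      destruct (cindex_correct _ _ (Hhit o' Ho')) as (x'&Ex'&Px').
      unfold labf in E. rewrite E in Ex. rewrite Ex in Ex'. inversion Ex'; subst. congruence.
Qed.

Lemma produce_E2 M N (v : valuation M) (w : valuation N) V n a (L : list (car N S2)) tx :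
  T0 M -> T0 N -> R2 N -> approx v w V -> ~ In (S2,n) V -> (forall t, tin V t -> teval v t <> a) ->
  tin V tx -> fn3 M a = teval v tx ->
  exists b, ~ In b L /\ approx (upd v S2 n a) (upd w S2 n b) ((S2,n)::V).
Proof.
  intros HM HN HR Hvw Hn Ha Htx Ea. pose proof HM as [HM0 HM3]. pose proof HN as [HN0 HN3].
  destruct (HR (teval w tx) (map (fun u => teval w u) (NF S2 V) ++ L) (map (fun u => teval w u) (NF S1 V)) (Pg v w V (fn1 M a)))
    as (b&Eb&Hb&HP).
  - apply Pg_functional; auto.
  - apply Pg_valid; try assumption; try (intro; apply HM0).
  - exists b. split; [intro H; apply Hb, in_app_iff; auto|].
    eapply ext_E2; eauto.
    + eapply not_in_C; eauto.
    + apply (presc_HA HM HN Hvw (fn1 M a) (fn1 N b)). intros c o H; apply HP; auto.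
Qed.

Lemma produce_E1 M N (v : valuation M) (w : valuation N) V n a (L : list (car N S1)) ta :
  T0 M -> T0 N -> R1 N -> approx v w V -> ~ In (S1,n) V -> (forall t, tin V t -> teval v t <> a) ->
  tin V ta -> fn0 M a = teval v ta ->
  exists b, ~ In b L /\ approx (upd v S1 n a) (upd w S1 n b) ((S1,n)::V).
Proof.
  intros HM HN HR Hvw Hn Ha Hta Ea.
  destruct (HR (teval w ta) (map (fun u => teval w u) (NF S1 V) ++ L)) as (b&Eb&Hb).
  exists b. split; [intro H; apply Hb, in_app_iff; auto|].
  eapply ext_E1; eauto. eapply not_in_C; eauto.
Qed.

Lemma fresh_index (V : list (sort*nat)) : exists K, forall s m, In (s,m) V -> m < K.
Proof.
  induction V as [|(s0,m0) r (K&HK)]; [exists 0; intros s m []|].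
  exists (S (max K m0)). intros s m [E|H]; [inversion E; subst; lia|]. specialize (HK s m H); lia.
Qed.

Lemma restrict M N (v : valuation M) (w : valuation N) V s n a b K (al : car M S0) (be : car N S0) :
  (forall s' m, In (s',m) V -> m < K) -> s <> S0 ->
  approx (upd (upd v S0 K al) s n a) (upd (upd w S0 K be) s n b) ((s,n)::(S0,K)::V) ->
  approx (upd v s n a) (upd w s n b) ((s,n)::V).
Proof.
  intros HK Hs H. apply approx_mono with (V := (s,n)::V) in H; [|intros p Hp; destruct Hp as [<-|Hp]; [left|right; right]; eauto].
  eapply approx_ext; [exact H| |]; intros s' m Hi;
    (destruct (classic ((s',m) = (s,n))) as [E|E];
     [inversion E; subst; rewrite !upd_same; auto|
      destruct Hi as [E'|Hi]; [congruence|];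
      assert ((s',m) <> (S0,K)) by (intro E'; inversion E'; subst; specialize (HK _ _ Hi); lia);
      rewrite !upd_other; auto]).
Qed.

Lemma rich_core N : T0 N -> R0 N -> R1 N -> R2 N ->
  forall M (v : valuation M) (w : valuation N) V s n (a : car M s) (L : list (car N s)),
  T0 M -> approx v w V -> ~ In (s,n) V -> (forall t, tin V t -> teval v t <> a) ->
  exists b, ~ In b L /\ approx (upd v s n a) (upd w s n b) ((s,n)::V).
Proof.
  intros HN H0 H1 H2 M v w V s n a L HM Hvw Hn Ha.
  pose proof HM as [HM0 HM3]. pose proof HN as [HN0 HN3].
  destruct (fresh_index V) as (K&HK).
  assert (HKV : ~ In (S0,K) V) by (intro Hi; specialize (HK _ _ Hi); lia).
  destruct s.
  - eapply produce_E0; eauto.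
  - destruct (classic (exists ta, tin V ta /\ teval v ta = fn0 M a)) as [(ta&Hta&Ea)|Hno].
    + eapply produce_E1; eauto.
    + destruct (@produce_E0 M N v w V K (fn0 M a) (map (fn0 N) L) HM HN H0 Hvw HKV) as (bu&Hbu&Hu).
      { intros t Ht E; apply Hno; eauto. }
      set (v1 := upd v S0 K (fn0 M a)) in *. set (w1 := upd w S0 K bu) in *.
      assert (Hn1 : ~ In (S1,n) ((S0,K)::V)) by (intros [E|E]; [discriminate|auto]).
      assert (Hfin : exists b, ~ In b L /\ approx (upd v1 S1 n a) (upd w1 S1 n b) ((S1,n)::(S0,K)::V)).
      { destruct (classic (exists t, tin ((S0,K)::V) t /\ teval v1 t = a)) as [(t&Ht&Et)|Hno2].
        - exists (teval w1 t). split.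
          + intro Hi. apply Hbu. apply in_map_iff. exists (teval w1 t). split; auto.
            change (fn0 N (teval w1 t)) with (teval w1 (tF0 t)).
            assert (E1 : teval v1 (tF0 t) = teval v1 (tvar S0 K)) by (simpl; rewrite Et; unfold v1; rewrite upd_same; auto).
            apply Hu in E1; [|apply tin_F0; auto|apply tin_var; left; auto].
            rewrite E1. simpl. unfold w1. apply upd_same.
          + rewrite <- Et. apply ext_in; auto.
        - eapply produce_E1 with (ta := tvar S0 K); eauto.
          + apply tin_var; left; auto.
          + simpl. unfold v1. rewrite upd_same. auto. }
      destruct Hfin as (b&Hb&Hap). exists b; split; auto.
      eapply restrict; eauto. discriminate.
  - destruct (classic (exists tx, tin V tx /\ teval v tx = fn3 M a)) as [(tx&Htx&Ex)|Hno].
    + eapply produce_E2; eauto.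
    + destruct (@produce_E0 M N v w V K (fn3 M a) (map (fn3 N) L) HM HN H0 Hvw HKV) as (bu&Hbu&Hu).
      { intros t Ht E; apply Hno; eauto. }
      set (v1 := upd v S0 K (fn3 M a)) in *. set (w1 := upd w S0 K bu) in *.
      assert (Hn1 : ~ In (S2,n) ((S0,K)::V)) by (intros [E|E]; [discriminate|auto]).
      assert (Hfin : exists b, ~ In b L /\ approx (upd v1 S2 n a) (upd w1 S2 n b) ((S2,n)::(S0,K)::V)).
      { destruct (classic (exists t, tin ((S0,K)::V) t /\ teval v1 t = a)) as [(t&Ht&Et)|Hno2].
        - exists (teval w1 t). split.
          + intro Hi. apply Hbu. apply in_map_iff. exists (teval w1 t). split; auto.
            change (fn3 N (teval w1 t)) with (teval w1 (tF3 t)).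
            assert (E1 : teval v1 (tF3 t) = teval v1 (tvar S0 K)) by (simpl; rewrite Et; unfold v1; rewrite upd_same; auto).
            apply Hu in E1; [|apply tin_F3; auto|apply tin_var; left; auto].
            rewrite E1. simpl. unfold w1. apply upd_same.
          + rewrite <- Et. apply ext_in; auto.
        - eapply produce_E2 with (tx := tvar S0 K); eauto.
          + apply tin_var; left; auto.
          + simpl. unfold v1. rewrite upd_same. auto. }
      destruct Hfin as (b&Hb&Hap). exists b; split; auto.
      eapply restrict; eauto. discriminate.
Qed.

Lemma intrinsic_rich N : T0 N -> R0 N -> R1 N -> R2 N -> Rich N.
Proof.
  intros HN H0 H1 H2 M v w V s n a L HM Hvw Ha.
  set (V0 := filter (fun p => negb (sort_eqb (fst p) s && Nat.eqb (snd p) n)) V).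
  assert (HV0 : incl V0 V) by (intros p Hp; apply filter_In in Hp; tauto).
  assert (Hn : ~ In (s,n) V0).
  { intro Hi. apply filter_In in Hi. destruct Hi as [_ Hi]. simpl in Hi.
    rewrite sort_eqb_refl, Nat.eqb_refl in Hi. discriminate. }
  destruct (@rich_core N HN H0 H1 H2 M v w V0 s n a L HM (approx_mono Hvw HV0) Hn) as (b&Hb&Hap).
  { intros t Ht. apply Ha. eapply tin_mono; eauto. }
  exists b; split; auto. eapply approx_mono; eauto.
  intros (s',m) [E|Hi]; [left; auto|].
  destruct (classic ((s',m) = (s,n))) as [E|E]; [left; auto|right].
  apply filter_In; split; auto. simpl.
  destruct (sort_eqb s' s) eqn:E1; destruct (Nat.eqb m n) eqn:E2; auto.
  apply sort_eqb_true in E1; apply Nat.eqb_eq in E2; subst; congruence.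
Qed.

Definition Tstar : theory := fun sg => sentence sg /\
  forall R, T0 R -> Rich R -> forall r : valuation R, sat r sg.

Fixpoint fAlls (l : list (sort*nat)) (phi : form) : form :=
  match l with [] => phi | (s,n)::r => fAll s n (fAlls r phi) end.

Lemma fAlls_intro R phi l : (forall r : valuation R, sat r phi) -> forall r : valuation R, sat r (fAlls l phi).
Proof. induction l as [|(s,n) l IH]; simpl; auto. Qed.

Lemma fAlls_elim R phi l : (forall r : valuation R, sat r (fAlls l phi)) -> forall r : valuation R, sat r phi.
Proof.
  induction l as [|(s,n) l IH]; simpl; auto.
  intros H. apply IH. intro r. specialize (H r (r s n)). rewrite upd_eta in H. exact H.
Qed.

Lemma fAlls_free l phi s n : ffree s n (fAlls l phi) = true -> ffree s n phi = true /\ ~ In (s,n) l.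
Proof.
  induction l as [|(s',n') l IH]; simpl; [tauto|].
  intro H. apply andb_true_iff in H. destruct H as [H1 H2]. destruct (IH H2) as [IH1 IH2].
  split; auto. intros [E|E]; auto. inversion E; subst. rewrite sort_eqb_refl, Nat.eqb_refl in H1. discriminate.
Qed.

Lemma fAlls_sentence l phi : (forall s n, ffree s n phi = true -> In (s,n) l) -> sentence (fAlls l phi).
Proof.
  intros H s n. destruct (ffree s n (fAlls l phi)) eqn:E; auto.
  apply fAlls_free in E. destruct E as [E1 E2]. elim E2; auto.
Qed.

Lemma ax1_sentence : sentence ax_F0F1.
Proof. intros s n; destruct s, n; reflexivity. Qed.
Lemma ax2_sentence : sentence ax_F3F2.
Proof. intros s n; destruct s, n; reflexivity. Qed.

Lemma Tstar_T0 N : is_model Tstar N -> T0 N.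
Proof.
  intro H. apply T0_model. intros phi Hphi v. apply H. split.
  - destruct Hphi as [->| ->]; auto using ax1_sentence, ax2_sentence.
  - intros R HR _ r. apply T0_model in HR. apply HR; auto.
Qed.

Lemma rich_Tstar R : T0 R -> Rich R -> is_model Tstar R.
Proof. intros H1 H2 phi [_ H] v. apply H; auto. Qed.

Fixpoint noneqs s n (l : list nat) : form :=
  match l with [] => fTrue | i :: r => fAnd (fNot (fEq (tvar s n) (tvar s i))) (noneqs s n r) end.

Lemma noneqs_sat M (u : valuation M) s n l :
  sat u (noneqs s n l) <-> forall i, In i l -> u s n <> u s i.
Proof.
  induction l as [|i r IH]; simpl; [split; auto; intros _ _ []|].
  rewrite IH. split; [intros [H1 H2] j [<-|Hj]; auto|intros H; split; auto].
Qed.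

Lemma noneqs_free s n l s' m : ffree s' m (noneqs s n l) = true -> (s',m) = (s,n) \/ (s' = s /\ In m l).
Proof.
  induction l as [|i r IH]; simpl; [discriminate|].
  rewrite !orb_true_iff. intros [[H|H]|H]; auto.
  - apply tfree_var in H; destruct H; subst; auto.
  - apply tfree_var in H; destruct H; subst; auto.
  - destruct (IH H) as [E|[E1 E2]]; auto.
Qed.

Definition setv N (w : valuation N) s K (L : list (car N s)) : valuation N :=
  fun s' m => match sort_eq_dec s s' with
              | left e => if (K <=? m) && (m <? K + length L)
                          then eq_rect s (car N) (nth (m - K) L (w s K)) s' e else w s' m
              | right _ => w s' m end.

Lemma setv_low N (w : valuation N) s K L s' m : m < K -> setv w s K L s' m = w s' m.
Proof.
  intro H. unfold setv. destruct (sort_eq_dec s s'); auto.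
  destruct (K <=? m) eqn:E; auto. apply Nat.leb_le in E; lia.
Qed.

Lemma setv_hi N (w : valuation N) s K (L : list (car N s)) i : i < length L ->
  setv w s K L s (K + i) = nth i L (w s K).
Proof.
  intro H. unfold setv. rewrite sort_eq_refl.
  replace ((K <=? K + i) && (K + i <? K + length L)) with true.
  - simpl. f_equal. lia.
  - symmetry; apply andb_true_iff; split; [apply Nat.leb_le|apply Nat.ltb_lt]; lia.
Qed.

Lemma Tstar_rich N : is_model Tstar N -> Rich N.
Proof.
  intros HNm M v w V s n a L HM Hvw Ha.
  pose proof (Tstar_T0 HNm) as HN.
  destruct (patterns_cover v (atoms V)) as (fV&HfV&HvfV).
  destruct (patterns_cover (upd v s n a) (atoms ((s,n)::V))) as (fX&HfX&HvfX).
  destruct (fresh_index ((s,n)::V)) as (K&HK).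
  set (idx := seq K (length L)).
  set (sg0 := fImp fV (fEx s n (fAnd fX (noneqs s n idx)))).
  set (sg := fAlls (V ++ map (fun i => (s,i)) idx) sg0).
  assert (Hsg : Tstar sg).
  { split.
    - apply fAlls_sentence. intros s' m Hf. apply in_app_iff.
      simpl in Hf. apply orb_true_iff in Hf. destruct Hf as [Hf|Hf].
      + destruct (@patterns_free _ _ _ _ HfV Hf) as (at0&Hat&Hf'). left. eapply atoms_free; eauto.
      + apply andb_true_iff in Hf. destruct Hf as [Hne Hf]. apply orb_true_iff in Hf.
        destruct Hf as [Hf|Hf].
        * destruct (@patterns_free _ _ _ _ HfX Hf) as (at0&Hat&Hf'). apply atoms_free with (V := (s,n)::V) in Hf'; auto.
          destruct Hf' as [E|E]; auto. inversion E; subst. rewrite sort_eqb_refl, Nat.eqb_refl in Hne. discriminate.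
        * apply noneqs_free in Hf. destruct Hf as [E|[E1 E2]].
          -- inversion E; subst. rewrite sort_eqb_refl, Nat.eqb_refl in Hne. discriminate.
          -- subst. right. apply in_map; auto.
    - intros R HR RR. apply fAlls_intro. intros r Hr.
      assert (Hvr : approx v r V) by (apply approx_of_agree; auto; eapply patterns_agree; eauto).
      destruct (RR M v r V s n a (map (fun i => r s i) idx) HM Hvr Ha) as (c&Hc&Hap).
      exists c. split.
      + eapply patterns_transfer; eauto. apply agree_of_approx; auto.
      + apply noneqs_sat. intros i Hi. rewrite upd_same, upd_other.
        * intro E. apply Hc. rewrite E. apply in_map; auto.
        * intro E. injection E; intro Ein. unfold idx in Hi. apply in_seq in Hi.
          pose proof (HK s n (or_introl eq_refl)). lia. }
  pose proof (fAlls_elim _ _ (HNm sg Hsg)) as Hall.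
  set (r := setv w s K L).
  assert (Hrw : forall s' m, In (s',m) V -> r s' m = w s' m).
  { intros s' m Hi. apply setv_low. apply (HK s' m). right; auto. }
  specialize (Hall r). simpl in Hall.
  destruct Hall as (b&HbX&Hbne).
  - rewrite (qfree_ext r w fV).
    + eapply patterns_transfer; eauto. apply agree_of_approx; auto.
    + eapply patterns_qfree; eauto. apply atoms_qfree.
    + intros s' m Hf. apply Hrw. destruct (@patterns_free _ _ _ _ HfV Hf) as (at0&Hat&Hf'). eapply atoms_free; eauto.
  - exists b. split.
    + intro Hb. apply In_nth with (d := w s K) in Hb. destruct Hb as (i&Hi&Ei).
      apply noneqs_sat with (i := K + i) in Hbne; [|apply in_seq; lia].
      apply Hbne. rewrite upd_same, upd_other.
      * unfold r. rewrite setv_hi; auto.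
      * intro E. inversion E. specialize (HK s n (or_introl eq_refl)). lia.
    + assert (Hap : approx (upd v s n a) (upd r s n b) ((s,n)::V)).
      { apply approx_of_agree; auto. eapply patterns_agree; eauto. }
      eapply approx_ext; [exact Hap| |]; auto.
      intros s' m Hi. destruct (classic ((s',m) = (s,n))) as [E|E].
      * inversion E; subst. rewrite !upd_same; auto.
      * rewrite !upd_other; auto. destruct Hi as [E'|Hi]; [congruence|]. apply Hrw; auto.
Qed.

Fixpoint bigOr (l : list form) : form :=
  match l with [] => fFalse | f :: r => fOr f (bigOr r) end.

Lemma bigOr_sat M (v : valuation M) l : sat v (bigOr l) <-> exists f, In f l /\ sat v f.
Proof.
  induction l as [|f r IH]; simpl; [firstorder|].
  rewrite IH. split; [intros [H|(g&Hg&H)]; eauto|intros (g&[<-|Hg]&H); eauto].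
Qed.
Lemma bigOr_qfree l : (forall f, In f l -> qfree f = true) -> qfree (bigOr l) = true.
Proof. induction l as [|f r IH]; simpl; auto. intro H. rewrite H, IH; auto. Qed.
Lemma bigOr_free l s n : ffree s n (bigOr l) = true -> exists f, In f l /\ ffree s n f = true.
Proof.
  induction l as [|f r IH]; simpl; [discriminate|].
  rewrite orb_true_iff. intros [H|H]; eauto. destruct (IH H) as (g&?&?); eauto.
Qed.

Definition cfilter {X} (p : X -> Prop) (l : list X) : list X :=
  filter (fun x => if excluded_middle_informative (p x) then true else false) l.
Lemma cfilter_In X (p : X -> Prop) l x : In x (cfilter p l) <-> In x l /\ p x.
Proof.
  unfold cfilter. rewrite filter_In. destruct (excluded_middle_informative (p x)); intuition discriminate.
Qed.

Lemma Tstar_QE : quantifier_elimination Tstar.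
Proof.
  intro phi. set (V := fvlist phi).
  set (good := fun f => exists R (r : valuation R), T0 R /\ Rich R /\ sat r f /\ sat r phi).
  exists (bigOr (cfilter good (patterns (atoms V)))). split; [|split].
  - apply bigOr_qfree. intros f Hf. apply cfilter_In in Hf. eapply patterns_qfree; [apply Hf|apply atoms_qfree].
  - intros s n H. apply bigOr_free in H. destruct H as (f&Hf&H). apply cfilter_In in Hf.
    destruct (@patterns_free _ _ _ _ (proj1 Hf) H) as (at0&Hat&H').
    apply fvlist_spec. eapply atoms_free; eauto.
  - intros M HMm v. pose proof (Tstar_T0 HMm) as HM. pose proof (Tstar_rich HMm) as RM.
    rewrite bigOr_sat. split.
    + intro Hp. destruct (patterns_cover v (atoms V)) as (f&Hf&Hv).
      exists f. split; auto. apply cfilter_In. split; auto. exists M, v. auto.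
    + intros (f&Hf&Hv). apply cfilter_In in Hf. destruct Hf as [Hf (R&r&HR&RR&Hr&Hp)].
      assert (Hvr : approx v r V) by (apply approx_of_agree; auto; eapply patterns_agree; eauto).
      refine (proj2 (key phi HM HR RM RR (V:=V) _ Hvr) Hp). intros s n Hs; apply fvlist_spec; auto.
Qed.

Lemma Tstar_sentences M N : is_model Tstar M -> is_model Tstar N ->
  forall phi, sentence phi -> forall (vM : valuation M) (vN : valuation N), sat vM phi <-> sat vN phi.
Proof.
  intros HM HN phi Hs vM vN.
  apply (key phi (Tstar_T0 HM) (Tstar_T0 HN) (Tstar_rich HM) (Tstar_rich HN) (V := [])).
  - intros s n H. rewrite Hs in H. discriminate.
  - apply approx_nil.
Qed.

Lemma teval_vmap M N (f : embedding M N) (v : valuation M) s (t : term s) :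
  teval (vmap f v) t = emap f s (teval v t).
Proof.
  induction t; simpl; auto.
  - rewrite IHt, emap_F0; auto.
  - rewrite IHt1, IHt2, emap_F1; auto.
  - rewrite IHt, emap_F2; auto.
  - rewrite IHt, emap_F3; auto.
Qed.

Lemma approx_vmap M N (f : embedding M N) (v : valuation M) V : approx v (vmap f v) V.
Proof.
  intros s t1 t2 _ _. rewrite !teval_vmap. split; [congruence|apply emap_inj].
Qed.

Lemma approx_vmap2 A M N (f : embedding A M) (g : embedding A N) (v : valuation A) V :
  approx (vmap f v) (vmap g v) V.
Proof.
  intros s t1 t2 _ _. rewrite !teval_vmap. split; intro E; apply emap_inj in E; congruence.
Qed.

Lemma Tstar_model_complete : model_complete Tstar.
Proof.
  intros M N f HM HN phi v.
  apply (key phi (Tstar_T0 HM) (Tstar_T0 HN) (Tstar_rich HM) (Tstar_rich HN) (V := fvlist phi)).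
  - intros s n H; apply fvlist_spec; auto.
  - apply approx_vmap.
Qed.

Lemma Tstar_diag : forall A M N (f : embedding A M) (g : embedding A N),
  is_model T0plus A -> is_model Tstar M -> is_model Tstar N ->
  forall (phi : form) (v : valuation A), sat (vmap f v) phi <-> sat (vmap g v) phi.
Proof.
  intros A M N f g _ HM HN phi v.
  apply (key phi (Tstar_T0 HM) (Tstar_T0 HN) (Tstar_rich HM) (Tstar_rich HN) (V := fvlist phi)).
  - intros s n H; apply fvlist_spec; auto.
  - apply approx_vmap2.
Qed.

Lemma Tstar_sent : forall phi, Tstar phi -> sentence phi.
Proof. intros phi [H _]; auto. Qed.

Lemma Tstar_models_T0 M : is_model Tstar M -> is_model T0plus M.
Proof. intro H; apply T0_model, Tstar_T0, H. Qed.

Lemma Tstar_dcl_acl : dcl_eq_acl Tstar.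
Proof.
  intros M HMm A s0 b. pose proof (Tstar_T0 HMm) as HM. pose proof (Tstar_rich HMm) as RM.
  split.
  - intros (phi&n&v&Hpar&Hb&l&Hl).
    set (V := filter (fun p => negb (sort_eqb (fst p) s0 && Nat.eqb (snd p) n)) (fvlist phi)).
    assert (HV : forall s m, In (s,m) V <-> ffree s m phi = true /\ (s,m) <> (s0,n)).
    { intros s m. unfold V. rewrite filter_In, fvlist_spec. simpl.
      split; intros [H1 H2]; split; auto.
      - intro E; inversion E; subst. rewrite sort_eqb_refl, Nat.eqb_refl in H2. discriminate.
      - destruct (sort_eqb s s0) eqn:E1; destruct (Nat.eqb m n) eqn:E2; auto.
        apply sort_eqb_true in E1; apply Nat.eqb_eq in E2; subst; congruence. }
    destruct (classic (exists t, tin V t /\ teval v t = b)) as [(t&Ht&Et)|Hno].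
    + exists (fEq (tvar s0 n) t), n, v. split; [|split].
      * intros s m Hf Hne. apply Hpar; auto. simpl in Hf. apply orb_true_iff in Hf.
        destruct Hf as [Hf|Hf]; [apply tfree_var in Hf; destruct Hf; subst; tauto|].
        apply (HV s m). apply Ht; auto.
      * simpl. rewrite upd_same. rewrite <- Et. symmetry. apply teval_ext. intros s m Hf.
        apply upd_other. apply (HV s m). apply Ht; auto.
      * intros c Hc. simpl in Hc. rewrite upd_same in Hc. rewrite <- Et.
        transitivity (teval (upd v s0 n c) t); auto. apply teval_ext.
        intros s m Hf. apply upd_other. apply (HV s m). apply Ht; auto.
    + exfalso.
      destruct (RM M v v V s0 n b l HM (@approx_refl M v V)) as (c&Hc&Hap).
      { intros t Ht E; apply Hno; eauto. }
      apply Hc, Hl. refine (proj1 (key phi HM HM RM RM (V:=(s0,n)::V) _ Hap) Hb).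
      intros s m Hf. destruct (classic ((s,m) = (s0,n))) as [E|E]; [left; auto|right; apply HV; auto].
  - intros (phi&n&v&Hpar&Hb&Hu). exists phi, n, v. split; auto. split; auto.
    exists [b]. intros c Hc. left. symmetry. apply Hu; auto.
Qed.

Definition Fin (P : nat -> Prop) := exists B : list nat, forall k, P k -> In k B.

Lemma Fin_avoid P : Fin P -> exists k, ~ P k.
Proof.
  intros (B&HB). exists (S (fold_right max 0 B)). intro H. apply HB in H.
  assert (forall x, In x B -> x <= fold_right max 0 B).
  { clear. induction B as [|y r IH]; simpl; [tauto|]. intros x [<-|Hx]; [lia|]. specialize (IH x Hx); lia. }
  specialize (H0 _ H). lia.
Qed.
Lemma Fin_or P Q : Fin P -> Fin Q -> Fin (fun k => P k \/ Q k).
Proof. intros (B1&H1) (B2&H2). exists (B1 ++ B2). intros k [H|H]; apply in_app_iff; auto. Qed.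
Lemma Fin_inj X (f : nat -> X) (L : list X) : (forall i j, f i = f j -> i = j) -> Fin (fun k => In (f k) L).
Proof.
  intro Hf. induction L as [|y r (B&HB)]; [exists []; intros k []|].
  destruct (classic (exists i, f i = y)) as [(i&Hi)|Hn].
  - exists (i :: B). intros k [E|E]; [left; apply Hf; congruence|right; auto].
  - exists B. intros k [E|E]; auto. elim Hn; eauto.
Qed.
Lemma Fin_list X (l : list X) (Q : X -> nat -> Prop) : (forall x, In x l -> Fin (Q x)) ->
  Fin (fun k => exists x, In x l /\ Q x k).
Proof.
  induction l as [|y r IH]; intro H; [exists []; intros k (x&[]&_)|].
  destruct (H y (or_introl eq_refl)) as (B1&H1). destruct IH as (B2&H2); [intros; apply H; right; auto|].
  exists (B1 ++ B2). intros k (x&[<-|Hx]&Hq); apply in_app_iff; [left; auto|right; apply H2; eauto].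
Qed.

Section Ext.
Variable A : structure.

Inductive E0 : Type := ea0 (al : car A S0) | nx (Lab : LL) (l0 : nat) (P : PL) (pad : nat)
with E2 : Type := ea2 (al : car A S2) | base (c : E0) | nz (c0 : E0) (P : PL) (pad : nat)
with E1 : Type := ea1 (al : car A S1) | lab (c : E0) (l : nat) | fr (z : E2) (c : E0)
with LL : Type := Lnil | Lcons (z : E2) (l : nat) (r : LL)
with PL : Type := Pnil | Pcons (c : E0) (y : E1) (r : PL).

Fixpoint lookL (z : E2) (l : LL) : option nat :=
  match l with Lnil => None | Lcons z' k r => if edec z z' then Some k else lookL z r end.
Fixpoint lookP (c : E0) (p : PL) : option E1 :=
  match p with Pnil => None | Pcons c' y r => if edec c c' then Some y else lookP c r end.
Fixpoint keysL (l : LL) : list E2 := match l with Lnil => [] | Lcons z _ r => z :: keysL r end.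

Definition eF0 (y : E1) : E0 := match y with ea1 al => ea0 (fn0 A al) | lab c _ => c | fr _ c => c end.
Definition eF2 (c : E0) : E2 := match c with ea0 al => ea2 (fn2 A al) | _ => base c end.
Definition eF3 (z : E2) : E0 := match z with ea2 al => ea0 (fn3 A al) | base c => c | nz c0 _ _ => c0 end.
Definition presP (z : E2) : PL :=
  match z with base (nx _ _ P _) => P | nz _ P _ => P | _ => Pnil end.
Definition dflt (z : E2) (c : E0) : E1 :=
  match lookP c (presP z) with
  | Some y => if edec (eF0 y) c then y else fr z c
  | None => fr z c end.
Definition eF1 (z : E2) (c : E0) : E1 :=
  match c with
  | ea0 g => match z with ea2 al => ea1 (fn1 A al g) | _ => dflt z c end
  | nx Lab l0 _ _ => if edec z (base c) then lab c l0 else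
                      match lookL z Lab with Some k => lab c k | None => dflt z c end
  end.

Definition Ecar (s : sort) : Type := match s with S0 => E0 | S1 => E1 | S2 => E2 end.
Definition Einh (s : sort) : Ecar s :=
  match s return Ecar s with S0 => ea0 (inh A S0) | S1 => ea1 (inh A S1) | S2 => ea2 (inh A S2) end.

Definition Ext : structure :=
  {| car := Ecar; inh := Einh; fn0 := eF0; fn1 := eF1; fn2 := eF2; fn3 := eF3 |}.

Lemma dflt_F0 z c : eF0 (dflt z c) = c.
Proof. unfold dflt. destruct (lookP c (presP z)); [destruct (edec (eF0 e) c)|]; auto. Qed.

Lemma Ext_T0 : T0 A -> T0 Ext.
Proof.
  intros [H0 H3]. split; simpl.
  - intros z c. destruct c as [g|Lab l0 P pad].
    + destruct z; simpl; try apply dflt_F0. rewrite H0; auto.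
    + simpl. destruct (edec z _); auto. destruct (lookL z Lab); auto. apply dflt_F0.
  - intros c; destruct c; simpl; auto. rewrite H3; auto.
Qed.

Fixpoint toLL (l : list (E2 * nat)) : LL :=
  match l with [] => Lnil | (z,k) :: r => Lcons z k (toLL r) end.
Fixpoint toPL (l : list (E0 * option E1)) : PL :=
  match l with [] => Pnil | (c, Some y) :: r => Pcons c y (toPL r) | (c, None) :: r => toPL r end.

Lemma lookL_none z l : ~ In z (keysL l) -> lookL z l = None.
Proof.
  induction l as [|z' k r IH]; simpl; auto. intro H. destruct (edec z z'); [subst; tauto|]. auto.
Qed.

Lemma lookL_toLL z k Lab : In (z,k) Lab -> functional Lab -> lookL z (toLL Lab) = Some k.
Proof.
  induction Lab as [|(z',k') r IH]; simpl; [tauto|]. intros Hi Hf.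
  destruct (edec z z') as [E|E].
  - subst. f_equal. eapply Hf; [left; reflexivity|exact Hi].
  - destruct Hi as [E'|Hi]; [inversion E'; congruence|]. apply IH; auto.
    intros c o o' H1 H2; eapply Hf; right; eauto.
Qed.

Lemma lookP_sound c y P : lookP c (toPL P) = Some y -> In (c, Some y) P.
Proof.
  induction P as [|(c',o') r IH]; simpl; [discriminate|].
  destruct o' as [y'|]; simpl; auto.
  destruct (edec c c') as [E|E]; [intro H; inversion H; subst; auto|auto].
Qed.

Lemma lookP_none c P : (forall y, ~ In (c, Some y) P) -> lookP c (toPL P) = None.
Proof.
  induction P as [|(c',o') r IH]; simpl; auto. intro H.
  destruct o' as [y'|]; simpl.
  - destruct (edec c c') as [E|E]; [subst; elim (H y'); auto|]. apply IH; intros y Hy; apply (H y); auto.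
  - apply IH; intros y Hy; apply (H y); auto.
Qed.

Lemma lookP_complete c y P : In (c, Some y) P -> exists y', lookP c (toPL P) = Some y'.
Proof.
  induction P as [|(c',o') r IH]; simpl; [tauto|]. intros [E|Hi].
  - inversion E; subst. simpl. destruct (edec c c); [eauto|congruence].
  - destruct o' as [y'|]; simpl; auto. destruct (edec c c'); eauto.
Qed.

Lemma lookP_toPL c o P : In (c,o) P -> functional P -> lookP c (toPL P) = o.
Proof.
  intros Hi Hf. destruct (lookP c (toPL P)) as [y|] eqn:E.
  - apply lookP_sound in E. eapply Hf; eauto.
  - destruct o as [y|]; auto. destruct (lookP_complete _ _ _ Hi) as (y'&E'). congruence.
Qed.



Definition keysOf (c : E0) : list E2 := match c with nx Lab _ _ _ => keysL Lab | _ => [] end.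

Lemma eF1_dflt z c : z <> base c -> ~ In z (keysOf c) ->
  (forall al g, z = ea2 al -> c = ea0 g -> False) -> eF1 z c = dflt z c.
Proof.
  intros H1 H2 H3. destruct c as [g|Lab l0 P pad]; simpl.
  - destruct z; auto. elim (H3 al g); auto.
  - destruct (edec z _); [congruence|]. simpl in H2. rewrite lookL_none; auto.
Qed.

Lemma Ext_R1 : R1 Ext.
Proof.
  intros c L. destruct (Fin_avoid (Fin_inj (fun k => lab c k) L ltac:(intros i j E; inversion E; auto))) as (k&Hk).
  exists (lab c k). split; auto.
Qed.

Lemma Ext_R2 : R2 Ext.
Proof.
  intros c0 L2 L1 P HPf HPv. simpl in *.
  set (b := fun k => nz c0 (toPL P) k).
  assert (Hb : Fin (fun k => In (b k) L2 \/ (exists x, In x P /\ In (b k) (keysOf (fst x))) \/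
                              (exists x, In x P /\ In (fr (b k) (fst x)) L1))).
  { apply Fin_or; [|apply Fin_or]; [| |].
    - apply Fin_inj. intros i j E; inversion E; auto.
    - apply Fin_list. intros x _. apply Fin_inj. intros i j E; inversion E; auto.
    - apply Fin_list. intros x _. apply Fin_inj. intros i j E; inversion E; auto. }
  destruct (Fin_avoid Hb) as (k&Hk). exists (b k). split; [reflexivity|]. split; [tauto|].
  intros c o Hco. unfold presc. rewrite eF1_dflt.
  - unfold dflt. simpl. erewrite lookP_toPL; [|exact Hco|exact HPf]. destruct o as [y|].
    + destruct (edec (eF0 y) c) as [_|E]; auto. elim E. apply (HPv c y Hco).
    + intro H. apply Hk. right; right. exists (c, None); auto.
  - unfold b; discriminate.
  - intro H. apply Hk. right; left. exists (c,o); auto.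
  - unfold b; intros al g E; discriminate.
Qed.

Lemma Ext_R0 : R0 Ext.
Proof.
  intros L0 L1 P Lab l0 HPf HPv HPk HLf HLk. simpl in *.
  set (b := fun k => nx (toLL Lab) l0 (toPL P) k).
  assert (Hb : Fin (fun k => In (b k) L0 \/ (exists x, In x P /\ In (base (b k)) (keysOf (fst x))) \/
                              (exists x, In x P /\ In (fr (base (b k)) (fst x)) L1))).
  { apply Fin_or; [|apply Fin_or]; [| |].
    - apply Fin_inj. intros i j E; inversion E; auto.
    - apply Fin_list. intros x _. apply Fin_inj. intros i j E; inversion E; auto.
    - apply Fin_list. intros x _. apply Fin_inj. intros i j E; inversion E; auto. }
  destruct (Fin_avoid Hb) as (k&Hk). exists (b k). split; [tauto|]. split.
  - intros c o Hco. unfold presc. simpl.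
    assert (Ed : eF1 (base (b k)) c = dflt (base (b k)) c).
    { apply eF1_dflt.
      + intro E. assert (Ebc : b k = c) by (injection E; auto). apply Hk. left. rewrite Ebc. eapply HPk; eauto.
      + intro H. apply Hk. right; left. exists (c,o); auto.
      + intros al g E; discriminate. }
    rewrite Ed. unfold dflt. simpl. erewrite lookP_toPL; [|exact Hco|exact HPf]. destruct o as [y|].
    + destruct (edec (eF0 y) c) as [_|E]; auto. elim E. apply (HPv c y Hco).
    + intro H. apply Hk. right; right. exists (c, None); auto.
  - assert (Hval : forall z l, In (z,l) ((base (b k), l0) :: Lab) -> eF1 z (b k) = lab (b k) l).
    { intros z l [E|Hi].
      - inversion E; subst. simpl. destruct (edec (base (b k)) (base (b k))); congruence.
      - simpl. destruct (edec z (base (b k))) as [E|E].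
        + exfalso. apply Hk. left. specialize (HLk z l Hi). rewrite E in HLk. exact HLk.
        + erewrite lookL_toLL; [|exact Hi|exact HLf]. reflexivity. }
    intros z l z' l' H1 H2. change (eF1 z (b k) = eF1 z' (b k) <-> l = l'). rewrite (Hval _ _ H1), (Hval _ _ H2).
    split; [intro E; inversion E; auto|intros ->; auto].
Qed.

Lemma Ext_Rich : T0 A -> Rich Ext.
Proof. intro HA. apply intrinsic_rich; auto using Ext_T0, Ext_R0, Ext_R1, Ext_R2. Qed.

Definition emb_map s : car A s -> car Ext s :=
  match s return car A s -> Ecar s with S0 => ea0 | S1 => ea1 | S2 => ea2 end.

Definition Emb : embedding A Ext.
Proof.
  refine {| emap := emb_map |}.
  - intros s a b; destruct s; simpl; intro E; inversion E; auto.
  - intros; reflexivity.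
  - intros; reflexivity.
  - intros; reflexivity.
  - intros; reflexivity.
Defined.

End Ext.

Section Count.
Variables (X : Type) (g : X -> nat) (f : nat -> X).
Hypotheses (Hg : forall x y, g x = g y -> x = y) (Hf : forall i j, f i = f j -> i = j).

Definition Sm (n : nat) : Prop := exists x, g x = n.
Definition Sd (n : nat) : nat := if excluded_middle_informative (Sm n) then 1 else 0.
Fixpoint rank (n : nat) : nat := match n with 0 => 0 | S n => rank n + Sd n end.

Lemma rank_mono m n : m <= n -> rank m <= rank n.
Proof. induction 1; simpl; lia. Qed.

Lemma rank_strict m n : Sm m -> m < n -> rank m < rank n.
Proof.
  intros Hm Hmn. assert (rank (S m) <= rank n) by (apply rank_mono; lia).
  simpl in H. unfold Sd in H. destruct (excluded_middle_informative (Sm m)); [lia|tauto].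
Qed.

Lemma rank_inj m m' : Sm m -> Sm m' -> rank m = rank m' -> m = m'.
Proof.
  intros H1 H2 E. destruct (lt_eq_lt_dec m m') as [[Hl|Hl]|Hl]; auto.
  - pose proof (rank_strict H1 Hl); lia.
  - pose proof (rank_strict H2 Hl); lia.
Qed.

Lemma NoDup_map_injective (l : list nat) : NoDup l -> NoDup (map (fun i => g (f i)) l).
Proof.
  induction 1; simpl; constructor; auto.
  intro Hi. apply in_map_iff in Hi. destruct Hi as (y&E&Hy). apply Hg, Hf in E. subst; auto.
Qed.

Lemma big_elem n : exists m, n <= m /\ Sm m.
Proof.
  destruct (classic (exists i, n <= g (f i))) as [(i&Hi)|Hn].
  - exists (g (f i)). split; auto. exists (f i); auto.
  - exfalso. assert (Hl : length (map (fun i => g (f i)) (seq 0 (S n))) <= length (seq 0 n)).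
    { apply NoDup_incl_length; [apply NoDup_map_injective, seq_NoDup|].
      intros y Hy. apply in_map_iff in Hy. destruct Hy as (i&<-&_). apply in_seq.
      assert (~ n <= g (f i)) by (intro; apply Hn; eauto). lia. }
    rewrite length_map, !length_seq in Hl. lia.
Qed.

Lemma unbounded k : exists n, k <= rank n.
Proof.
  induction k as [|k (n&Hn)]; [exists 0; lia|].
  destruct (big_elem n) as (m&Hm&Sm0). exists (S m). simpl. unfold Sd.
  destruct (excluded_middle_informative (Sm m)); [|tauto]. pose proof (rank_mono Hm). lia.
Qed.

Lemma hit k : exists m, Sm m /\ rank m = k.
Proof.
  destruct (unbounded (S k)) as (n&Hn). revert Hn. induction n as [|n IH]; simpl; [lia|].
  intro H. destruct (le_lt_dec (S k) (rank n)) as [Hl|Hl]; auto.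
  unfold Sd in H. destruct (excluded_middle_informative (Sm n)); [|lia].
  exists n. split; auto. lia.
Qed.

Lemma hitX k : exists x, rank (g x) = k.
Proof. destruct (hit k) as (m&(x&<-)&E). eauto. Qed.

Definition Fc (k : nat) : X := proj1_sig (constructive_indefinite_description _ (hitX k)).

Lemma countable_of_inj : countably_infinite X.
Proof.
  exists Fc, (fun x => rank (g x)). split.
  - intro k. unfold Fc. destruct (constructive_indefinite_description _ _); auto.
  - intro x. unfold Fc. destruct (constructive_indefinite_description _ _) as (x'&E). simpl.
    apply Hg. apply rank_inj; [exists x'|exists x|]; auto.
Qed.
End Count.

Definition A1 : structure :=
  {| car := fun _ => unit; inh := fun _ => tt; fn0 := fun _ => tt; fn1 := fun _ _ => tt;
     fn2 := fun _ => tt; fn3 := fun _ => tt |}.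

Lemma A1_T0 : T0 A1.
Proof. split; simpl; intros; destruct x; auto. Qed.

Definition G := Ext A1.

Scheme E0_mut := Induction for E0 Sort Prop
with E2_mut := Induction for E2 Sort Prop
with E1_mut := Induction for E1 Sort Prop
with LL_mut := Induction for LL Sort Prop
with PL_mut := Induction for PL Sort Prop.
Combined Scheme E_mutind from E0_mut, E2_mut, E1_mut, LL_mut, PL_mut.

Definition pr (a b : nat) : nat := to_nat (a, b).
Lemma pr_inj a b a' b' : pr a b = pr a' b' -> a = a' /\ b = b'.
Proof.
  intro E. apply (f_equal of_nat) in E. unfold pr in E. rewrite !cancel_of_to in E. inversion E; auto.
Qed.

Fixpoint enc0 (e : E0 A1) : nat :=
  match e with ea0 _ _ => pr 0 0 | nx Lab l0 P pad => pr 1 (pr (encL Lab) (pr l0 (pr (encP P) pad))) end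
with enc2 (z : E2 A1) : nat :=
  match z with ea2 _ _ => pr 0 0 | base c => pr 1 (enc0 c) | nz c0 P pad => pr 2 (pr (enc0 c0) (pr (encP P) pad)) end
with enc1 (y : E1 A1) : nat :=
  match y with ea1 _ _ => pr 0 0 | lab c l => pr 1 (pr (enc0 c) l) | fr z c => pr 2 (pr (enc2 z) (enc0 c)) end
with encL (l : LL A1) : nat :=
  match l with Lnil _ => pr 0 0 | Lcons z k r => pr 1 (pr (enc2 z) (pr k (encL r))) end
with encP (p : PL A1) : nat :=
  match p with Pnil _ => pr 0 0 | Pcons c y r => pr 1 (pr (enc0 c) (pr (enc1 y) (encP r))) end.

Ltac prinj := repeat match goal with
  | H : pr _ _ = pr _ _ |- _ => apply pr_inj in H; destruct H
  end.

Lemma enc_inj :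
  (forall e, forall e', enc0 e = enc0 e' -> e = e') /\
  (forall e, forall e', enc2 e = enc2 e' -> e = e') /\
  (forall e, forall e', enc1 e = enc1 e' -> e = e') /\
  (forall e, forall e', encL e = encL e' -> e = e') /\
  (forall e, forall e', encP e = encP e' -> e = e').
Proof.
  apply E_mutind; intros; match goal with |- _ = ?e' => destruct e' end; simpl in *; prinj;
    try discriminate; try (f_equal; auto; fail);
    try (match goal with |- ?f ?a = ?f ?b => destruct a, b; reflexivity end).
Qed.

Definition scode (s : sort) : nat := match s with S0 => 0 | S1 => 1 | S2 => 2 end.
Definition encs (s : sort) : car G s -> nat :=
  match s return car G s -> nat with S0 => enc0 | S1 => enc1 | S2 => enc2 end.

Lemma G_countable : countably_infinite (universe G).
Proof.
  apply countable_of_inj with (g := fun u => pr (scode (projT1 u)) (encs (projT1 u) (projT2 u)))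
                              (f := fun n => existT _ S1 (lab (@ea0 A1 tt) n)).
  - intros [s x] [s' x'] E. simpl in E. prinj.
    destruct s, s'; try discriminate; simpl in *; f_equal; apply enc_inj; auto.
  - intros i j E. apply inj_pair2_eq_dec in E; [|exact sort_eq_dec]. inversion E; auto.
Qed.

Lemma G_T0 : T0 G.
Proof. apply Ext_T0, A1_T0. Qed.
Lemma G_Rich : Rich G.
Proof. apply Ext_Rich, A1_T0. Qed.

Lemma nth_error_None2 {X} (l : list X) n : length l <= n -> nth_error l n = None.
Proof. apply nth_error_None. Qed.

Section BF.
Variables (M N : structure).
Hypotheses (HM : T0 M) (HN : T0 N) (RM : Rich M) (RN : Rich N).

Definition Pair := {s : sort & (car M s * car N s)%type}.

Definition vM (l : list Pair) : valuation M := fun s i =>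
  match nth_error l i with
  | Some (existT _ s' (a, _)) => match sort_eq_dec s' s with left e => eq_rect s' (car M) a s e | right _ => inh M s end
  | None => inh M s end.
Definition vN (l : list Pair) : valuation N := fun s i =>
  match nth_error l i with
  | Some (existT _ s' (_, b)) => match sort_eq_dec s' s with left e => eq_rect s' (car N) b s e | right _ => inh N s end
  | None => inh N s end.

Fixpoint VVaux (l : list Pair) (k : nat) : list (sort*nat) :=
  match l with [] => [] | p :: r => (projT1 p, k) :: VVaux r (S k) end.
Definition VV l := VVaux l 0.

Lemma VVaux_app l p k : VVaux (l ++ [p]) k = VVaux l k ++ [(projT1 p, k + length l)].
Proof.
  revert k; induction l as [|q r IH]; intro k; simpl; [rewrite Nat.add_0_r; reflexivity|].
  rewrite IH. replace (S k + length r) with (k + S (length r)) by lia. reflexivity.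
Qed.

Lemma VV_app l p : VV (l ++ [p]) = VV l ++ [(projT1 p, length l)].
Proof. unfold VV. rewrite VVaux_app. reflexivity. Qed.

Lemma VVaux_spec l k s i : In (s,i) (VVaux l k) -> exists p, nth_error l (i - k) = Some p /\ projT1 p = s /\ k <= i.
Proof.
  revert k; induction l as [|q r IH]; intro k; simpl; [tauto|].
  intros [E|H].
  - inversion E; subst. replace (i - i) with 0 by lia. simpl. eauto.
  - destruct (IH _ H) as (p&Hp&Ep&Hk). exists p. replace (i - k) with (S (i - S k)) by lia. simpl. auto with arith.
Qed.

Lemma VV_nth l i s a b : nth_error l i = Some (existT _ s (a,b)) -> In (s,i) (VV l).
Proof.
  unfold VV. replace i with (i + 0) at 2 by lia. generalize 0. revert i.
  induction l as [|q r IH]; intros i k H; [destruct i; discriminate|].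
  destruct i; simpl in H.
  - inversion H; subst. simpl. left; auto.
  - simpl. right. replace (S (i + k)) with (i + S k) by lia. apply IH; auto.
Qed.

Lemma vM_nth l i s a b : nth_error l i = Some (existT _ s (a,b)) -> vM l s i = a.
Proof. intro H. unfold vM, Pair in *. rewrite H, sort_eq_refl. reflexivity. Qed.
Lemma vN_nth l i s a b : nth_error l i = Some (existT _ s (a,b)) -> vN l s i = b.
Proof. intro H. unfold vN, Pair in *. rewrite H, sort_eq_refl. reflexivity. Qed.

Lemma vM_app l s a b : vM (l ++ [existT _ s (a,b)]) = upd (vM l) s (length l) a.
Proof.
  apply functional_extensionality_dep; intro s'; apply functional_extensionality; intro i.
  destruct (lt_eq_lt_dec i (length l)) as [[Hl|Hl]|Hl].
  - rewrite upd_other by (intro E; inversion E; lia). unfold vM. rewrite nth_error_app1; auto.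
  - subst. unfold vM at 1. rewrite nth_error_app2, Nat.sub_diag by lia. simpl.
    destruct (sort_eq_dec s s') as [e|e].
    + subst. rewrite upd_same. reflexivity.
    + rewrite upd_other by congruence. unfold vM. rewrite nth_error_None2; auto.
  - rewrite upd_other by (intro E; inversion E; lia). unfold vM.
    rewrite !nth_error_None2; auto; unfold Pair in *; rewrite ?length_app; simpl; lia.
Qed.
Lemma vN_app l s a b : vN (l ++ [existT _ s (a,b)]) = upd (vN l) s (length l) b.
Proof.
  apply functional_extensionality_dep; intro s'; apply functional_extensionality; intro i.
  destruct (lt_eq_lt_dec i (length l)) as [[Hl|Hl]|Hl].
  - rewrite upd_other by (intro E; inversion E; lia). unfold vN. rewrite nth_error_app1; auto.
  - subst. unfold vN at 1. rewrite nth_error_app2, Nat.sub_diag by lia. simpl.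
    destruct (sort_eq_dec s s') as [e|e].
    + subst. rewrite upd_same. reflexivity.
    + rewrite upd_other by congruence. unfold vN. rewrite nth_error_None2; auto.
  - rewrite upd_other by (intro E; inversion E; lia). unfold vN.
    rewrite !nth_error_None2; auto; unfold Pair in *; rewrite ?length_app; simpl; lia.
Qed.

Definition Inv (l : list Pair) := approx (vM l) (vN l) (VV l).

Lemma Inv_nil : Inv [].
Proof. apply approx_nil. Qed.

Lemma Inv_app l s a b : approx (upd (vM l) s (length l) a) (upd (vN l) s (length l) b) ((s, length l) :: VV l) ->
  Inv (l ++ [existT _ s (a,b)]).
Proof.
  intro H. unfold Inv. rewrite vM_app, vN_app, VV_app. eapply approx_mono; [exact H|].
  intros p Hp. apply in_app_iff in Hp. destruct Hp as [Hp|[<-|[]]]; [right; auto|left; auto].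
Qed.

Lemma forth l s (a : car M s) : Inv l -> exists b, Inv (l ++ [existT _ s (a,b)]).
Proof.
  intro H. destruct (@rich_basic N RN M (vM l) (vN l) (VV l) s (length l) a HM H) as (b&Hb).
  exists b. apply Inv_app; auto.
Qed.

Lemma back l s (b : car N s) : Inv l -> exists a, Inv (l ++ [existT _ s (a,b)]).
Proof.
  intro H. destruct (@rich_basic M RM N (vN l) (vM l) (VV l) s (length l) b HN (approx_sym H)) as (a&Ha).
  exists a. apply Inv_app; auto. apply approx_sym; auto.
Qed.

Definition forthS (l : {l | Inv l}) (x : universe M) : {l | Inv l} :=
  let b := constructive_indefinite_description _ (@forth (proj1_sig l) _ (projT2 x) (proj2_sig l)) in
  exist _ (proj1_sig l ++ [existT _ (projT1 x) (projT2 x, proj1_sig b)]) (proj2_sig b).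
Definition backS (l : {l | Inv l}) (y : universe N) : {l | Inv l} :=
  let a := constructive_indefinite_description _ (@back (proj1_sig l) _ (projT2 y) (proj2_sig l)) in
  exist _ (proj1_sig l ++ [existT _ (projT1 y) (proj1_sig a, projT2 y)]) (proj2_sig a).

Variables (fM : nat -> universe M) (fN : nat -> universe N) (gM : universe M -> nat) (gN : universe N -> nat).
Hypotheses (HfgM : forall x, fM (gM x) = x) (HfgN : forall x, fN (gN x) = x).

Fixpoint stage (k : nat) : {l | Inv l} :=
  match k with 0 => exist _ [] Inv_nil | S k => backS (forthS (stage k) (fM k)) (fN k) end.
Definition Lk k := proj1_sig (stage k).

Lemma Lk_S k : exists p1 p2, Lk (S k) = Lk k ++ [p1] ++ [p2] /\
  (exists b, p1 = existT _ (projT1 (fM k)) (projT2 (fM k), b)) /\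
  (exists a, p2 = existT _ (projT1 (fN k)) (a, projT2 (fN k))).
Proof.
  unfold Lk. simpl. unfold backS, forthS. simpl. do 2 eexists. split; [rewrite <- app_assoc; reflexivity|]. eauto.
Qed.

Lemma Lk_len k : length (Lk k) = 2 * k.
Proof.
  induction k as [|k IH]; [reflexivity|]. destruct (Lk_S k) as (p1&p2&E&_). rewrite E, !length_app. simpl. lia.
Qed.

Lemma Lk_prefix k d : exists r, Lk (k + d) = Lk k ++ r.
Proof.
  induction d as [|d (r&Hr)]; [exists []; rewrite app_nil_r; f_equal; lia|].
  destruct (Lk_S (k + d)) as (p1&p2&E&_). exists (r ++ [p1] ++ [p2]).
  replace (k + S d) with (S (k + d)) by lia. rewrite E, Hr, <- !app_assoc. reflexivity.
Qed.

Definition appear s (a : car M s) (b : car N s) := exists k i, nth_error (Lk k) i = Some (existT _ s (a,b)).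

Lemma nth_mono k k' i p : nth_error (Lk k) i = Some p -> k <= k' -> nth_error (Lk k') i = Some p.
Proof.
  intros H Hk. destruct (Lk_prefix k (k' - k)) as (r&Hr). replace (k + (k' - k)) with k' in Hr by lia.
  rewrite Hr, nth_error_app1; auto. apply nth_error_Some. congruence.
Qed.

Lemma appear_M s a : exists b, appear s a b.
Proof.
  set (k := gM (existT _ s a)). destruct (Lk_S k) as (p1&p2&E&(b&Eb)&_).
  assert (Hn : nth_error (Lk (S k)) (2 * k) = Some p1).
  { rewrite E, nth_error_app2, Lk_len, Nat.sub_diag; auto. rewrite Lk_len; lia. }
  assert (H : exists b0 : car N (projT1 (fM k)), nth_error (Lk (S k)) (2 * k) = Some (existT _ (projT1 (fM k)) (projT2 (fM k), b0))).
  { exists b. rewrite Hn, Eb. reflexivity. }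
  unfold k in H. rewrite HfgM in H. simpl in H. destruct H as (b0&Hb0). exists b0, (S (gM (existT _ s a))), (2 * gM (existT _ s a)). auto.
Qed.

Lemma appear_N s b : exists a, appear s a b.
Proof.
  set (k := gN (existT _ s b)). destruct (Lk_S k) as (p1&p2&E&_&(a&Ea)).
  assert (Hn : nth_error (Lk (S k)) (S (2 * k)) = Some p2).
  { rewrite E, nth_error_app2, Lk_len by (rewrite Lk_len; lia). replace (S (2*k) - 2*k) with 1 by lia. reflexivity. }
  assert (H : exists a0 : car M (projT1 (fN k)), nth_error (Lk (S k)) (S (2 * k)) = Some (existT _ (projT1 (fN k)) (a0, projT2 (fN k)))).
  { exists a. rewrite Hn, Ea. reflexivity. }
  unfold k in H. rewrite HfgN in H. simpl in H. destruct H as (a0&Ha0). exists a0, (S (gN (existT _ s b))), (S (2 * gN (existT _ s b))). auto.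
Qed.

Lemma Inv_Lk k : Inv (Lk k).
Proof. unfold Lk. destruct (stage k); auto. Qed.

Lemma appear_cons s a b s' a' b' : appear s a b -> appear s' a' b' ->
  exists k i j, nth_error (Lk k) i = Some (existT _ s (a,b)) /\ nth_error (Lk k) j = Some (existT _ s' (a',b')).
Proof.
  intros (k1&i&H1) (k2&j&H2). exists (max k1 k2), i, j. split; eapply nth_mono; eauto; lia.
Qed.

Lemma appear_bij s a b a' b' : appear s a b -> appear s a' b' -> (a = a' <-> b = b').
Proof.
  intros H1 H2. destruct (appear_cons H1 H2) as (k&i&j&Hi&Hj).
  pose proof (Inv_Lk k) as HI.
  specialize (HI s (tvar s i) (tvar s j) (tin_var _ _ _ (VV_nth _ _ Hi)) (tin_var _ _ _ (VV_nth _ _ Hj))).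
  simpl in HI. rewrite (vM_nth _ _ Hi), (vM_nth _ _ Hj), (vN_nth _ _ Hi), (vN_nth _ _ Hj) in HI. exact HI.
Qed.

Definition emapBF s (a : car M s) : car N s := proj1_sig (constructive_indefinite_description _ (appear_M s a)).
Lemma emapBF_spec s a : appear s a (emapBF s a).
Proof. unfold emapBF. destruct (constructive_indefinite_description _ _); auto. Qed.

Ltac common3 H1 H2 H3 :=
  let k1 := fresh in let k2 := fresh in let k3 := fresh in
  let i1 := fresh in let i2 := fresh in let i3 := fresh in
  destruct H1 as (k1&i1&H1); destruct H2 as (k2&i2&H2); destruct H3 as (k3&i3&H3);
  apply nth_mono with (k' := max k1 (max k2 k3)) in H1; [|lia];
  apply nth_mono with (k' := max k1 (max k2 k3)) in H2; [|lia];
  apply nth_mono with (k' := max k1 (max k2 k3)) in H3; [|lia].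

Lemma BF_iso : exists f : embedding M N, isomorphism f.
Proof.
  pose proof HM as [HM0 HM3]. pose proof HN as [HN0 HN3].
  unshelve eexists {| emap := emapBF |}.
  - intros s a a' E. pose proof (emapBF_spec s a) as H1. pose proof (emapBF_spec s a') as H2.
    rewrite E in H1. apply (appear_bij H1 H2). reflexivity.
  - intro a. pose proof (emapBF_spec S1 a) as H1. pose proof (emapBF_spec S0 (fn0 M a)) as H2.
    assert (H3 := H1). common3 H1 H2 H3. set (k := max _ _) in *.
    pose proof (Inv_Lk k) as HI.
    specialize (HI S0 (tF0 (tvar S1 _)) (tvar S0 _) (tin_F0 (tin_var _ _ _ (VV_nth _ _ H1))) (tin_var _ _ _ (VV_nth _ _ H2))).
    simpl in HI. rewrite (vM_nth _ _ H1), (vM_nth _ _ H2), (vN_nth _ _ H1), (vN_nth _ _ H2) in HI.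
    symmetry. apply HI. reflexivity.
  - intros z c. pose proof (emapBF_spec S2 z) as H1. pose proof (emapBF_spec S0 c) as H2.
    pose proof (emapBF_spec S1 (fn1 M z c)) as H3. common3 H1 H2 H3. set (k := max _ _) in *.
    pose proof (Inv_Lk k) as HI.
    specialize (HI S1 (tF1 (tvar S2 _) (tvar S0 _)) (tvar S1 _)
      (tin_F1 (tin_var _ _ _ (VV_nth _ _ H1)) (tin_var _ _ _ (VV_nth _ _ H2))) (tin_var _ _ _ (VV_nth _ _ H3))).
    simpl in HI. rewrite (vM_nth _ _ H1), (vM_nth _ _ H2), (vM_nth _ _ H3), (vN_nth _ _ H1), (vN_nth _ _ H2), (vN_nth _ _ H3) in HI.
    symmetry. apply HI. reflexivity.
  - intro a. pose proof (emapBF_spec S0 a) as H1. pose proof (emapBF_spec S2 (fn2 M a)) as H2.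
    assert (H3 := H1). common3 H1 H2 H3. set (k := max _ _) in *.
    pose proof (Inv_Lk k) as HI.
    specialize (HI S2 (tF2 (tvar S0 _)) (tvar S2 _) (tin_F2 (tin_var _ _ _ (VV_nth _ _ H1))) (tin_var _ _ _ (VV_nth _ _ H2))).
    simpl in HI. rewrite (vM_nth _ _ H1), (vM_nth _ _ H2), (vN_nth _ _ H1), (vN_nth _ _ H2) in HI.
    symmetry. apply HI. reflexivity.
  - intro a. pose proof (emapBF_spec S2 a) as H1. pose proof (emapBF_spec S0 (fn3 M a)) as H2.
    assert (H3 := H1). common3 H1 H2 H3. set (k := max _ _) in *.
    pose proof (Inv_Lk k) as HI.
    specialize (HI S0 (tF3 (tvar S2 _)) (tvar S0 _) (tin_F3 (tin_var _ _ _ (VV_nth _ _ H1))) (tin_var _ _ _ (VV_nth _ _ H2))).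
    simpl in HI. rewrite (vM_nth _ _ H1), (vM_nth _ _ H2), (vN_nth _ _ H1), (vN_nth _ _ H2) in HI.
    symmetry. apply HI. reflexivity.
  - intros s b. destruct (appear_N s b) as (a&Ha). exists a. simpl.
    apply (appear_bij (emapBF_spec s a) Ha). reflexivity.
Qed.
End BF.

Lemma G_model : is_model Tstar G.
Proof. apply rich_Tstar; [apply G_T0|apply G_Rich]. Qed.

Theorem claim2p5 :
  exists Tstar : theory,
    (forall phi, Tstar phi -> sentence phi) /\
    model_completion T0plus Tstar /\
    complete Tstar /\
    quantifier_elimination Tstar /\
    aleph0_categorical Tstar /\
    dcl_eq_acl Tstar.
Proof.
  exists Tstar. split; [exact Tstar_sent|]. split; [|split; [|split; [|split]]].
  - split; [exact Tstar_models_T0|]. split; [|split; [exact Tstar_model_complete|exact Tstar_diag]].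
    intros A HA. apply T0_model in HA. exists (Ext A). split.
    + apply rich_Tstar; [apply Ext_T0, HA|apply Ext_Rich, HA].
    + constructor. exact (Emb A).
  - split; [exists G; exact G_model|]. intros M N HM HN phi Hs vM vN. apply Tstar_sentences; auto.
  - exact Tstar_QE.
  - split.
    + exists G. split; [exact G_model|exact G_countable].
    + intros M N HM HN (fM&gM&H1M&H2M) (fN&gN&H1N&H2N).
      eapply BF_iso; eauto using Tstar_T0, Tstar_rich.
  - exact Tstar_dcl_acl.
Qed.
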